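(* Let $k\in\{1,2,\dots\}\cup\{\infty\}$. Every $C^k$-structure on the line with two origins $\mathbb{L}$ is represented by some orientable minimal atlas.
   Context: $\mathbb{L}=\mathbb{R}\sqcup\{0'\}$ has as open sets the open subsets of $\mathbb{R}$ and the sets $(W\setminus\{0\})\cup\{0'\}$ with $W\subset\mathbb{R}$ open, $0\in W$. Put $U=\mathbb{L}\setminus\{0'\}=\mathbb{R}$, $V=\mathbb{L}\setminus\{0\}$. Charts (homeomorphisms of open subsets of $\mathbb{L}$ onto open subsets of $\mathbb{R}$), $C^k$-compatibility, $C^k$-atlases and $C^k$-structures (equivalence classes of atlases whose union is again a $C^k$-atlas) are defined as for manifolds; an atlas represents a structure if it belongs to it. A minimal atlas is a $C^k$-atlas $\{(U,\varphi),(V,\psi)\}$ where $\varphi\colon U\to\mathbb{R}$, $\psi\colon V\to\mathbb{R}$ are homeomorphisms onto $\mathbb{R}$ with $\varphi(0)=\psi(0')=0$. It is orientable if its transition map $\psi\circ\varphi^{-1}\colon\mathbb{R}\setminus\{0\}\to\mathbb{R}\setminus\{0\}$ preserves orientation (has positive derivative everywhere). *)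

(* Defs.v *)
From Stdlib Require Import Reals.
From Coquelicot Require Import Coquelicot.
Open Scope R_scope.

(** The line with two origins: points of R plus an extra origin [o']. *)
Inductive L : Type := pt (x : R) | o'.

(** Topology of L: A is open iff its trace on the copy U = R (points pt x)
    is open in R, and its trace on V = (R \ {0}) u {0'} (identified with R
    via 0' |-> 0) is open in R. *)
Definition openL (A : L -> Prop) : Prop :=
  open (fun x : R => A (pt x)) /\
  open (fun x : R => (x = 0 /\ A o') \/ (x <> 0 /\ A (pt x))).

(** A (candidate) chart: a domain in L and a map L -> R (only its values on
    the domain matter). *)
Record chart := mkchart { cdom : L -> Prop; cmap : L -> R }.

Definition cimage (f : L -> R) (A : L -> Prop) (y : R) : Prop :=
  exists p, A p /\ f p = y.

Definition is_chart (c : chart) : Prop :=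
  openL (cdom c) /\
  (forall p q, cdom c p -> cdom c q -> cmap c p = cmap c q -> p = q) /\
  open (cimage (cmap c) (cdom c)) /\
  (forall W : R -> Prop, open W -> openL (fun p => cdom c p /\ W (cmap c p))) /\
  (forall A : L -> Prop, openL A -> (forall p, A p -> cdom c p) ->
      open (cimage (cmap c) A)).

Inductive smoothness := fin (n : nat) | infty.

Definition Ck_on (k : smoothness) (g : R -> R) (U : R -> Prop) : Prop :=
  match k with
  | fin n =>
      (forall m, (m < n)%nat -> forall x, U x -> ex_derive (Derive_n g m) x) /\
      (forall x, U x -> continuous (Derive_n g n) x)
  | infty => forall m x, U x -> ex_derive (Derive_n g m) x
  end.

Definition trans_Ck (k : smoothness) (c1 c2 : chart) : Prop :=
  exists g : R -> R,
    (forall p, cdom c1 p -> cdom c2 p -> g (cmap c1 p) = cmap c2 p) /\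
    Ck_on k g (cimage (cmap c1) (fun p => cdom c1 p /\ cdom c2 p)).

Definition Ck_compatible (k : smoothness) (c1 c2 : chart) : Prop :=
  trans_Ck k c1 c2 /\ trans_Ck k c2 c1.

Definition Ck_atlas (k : smoothness) (A : chart -> Prop) : Prop :=
  (forall c, A c -> is_chart c) /\
  (forall p, exists c, A c /\ cdom c p) /\
  (forall c1 c2, A c1 -> A c2 -> Ck_compatible k c1 c2).

Definition atlas_union (A B : chart -> Prop) (c : chart) : Prop := A c \/ B c.

Definition Ck_structure (k : smoothness) (S : (chart -> Prop) -> Prop) : Prop :=
  exists A, Ck_atlas k A /\
    forall B, S B <-> (Ck_atlas k B /\ Ck_atlas k (atlas_union A B)).

Definition U_L (p : L) : Prop := p <> o'.
Definition V_L (p : L) : Prop := p <> pt 0.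

Definition two_charts (phi psi : L -> R) (c : chart) : Prop :=
  c = mkchart U_L phi \/ c = mkchart V_L psi.

Definition minimal_atlas (k : smoothness) (phi psi : L -> R) : Prop :=
  Ck_atlas k (two_charts phi psi) /\
  (forall y, cimage phi U_L y) /\ (forall y, cimage psi V_L y) /\
  phi (pt 0) = 0 /\ psi o' = 0.

Definition orientable (phi psi : L -> R) : Prop :=
  exists g : R -> R,
    (forall p, U_L p -> V_L p -> g (phi p) = psi p) /\
    (forall y, y <> 0 -> exists d, is_derive g y d /\ 0 < d).

(* Main.v *)
Require Import Defs.
From Stdlib Require Import Reals Lra Lia ClassicalEpsilon Classical.
From Coquelicot Require Import Coquelicot.
Open Scope R_scope.

Lemma isd_plus f g x a b : is_derive f x a -> is_derive g x b -> is_derive (fun y => f y + g y) x (a+b).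
Proof. intros; exact (is_derive_plus f g x a b H H0). Qed.
Lemma isd_mult f g x a b : is_derive f x a -> is_derive g x b -> is_derive (fun y => f y * g y) x (a * g x + f x * b).
Proof. intros; exact (is_derive_mult f g x a b H H0 ltac:(intros; apply Rmult_comm)). Qed.
Lemma isd_comp f g x a b : is_derive f (g x) a -> is_derive g x b -> is_derive (fun y => f (g y)) x (b * a).
Proof. intros; exact (is_derive_comp f g x a b H H0). Qed.
Lemma isd_const (c x : R) : is_derive (fun _ => c) x 0.
Proof. exact (is_derive_const c x). Qed.
Lemma isd_id (x : R) : is_derive (fun y => y) x 1.
Proof. exact (is_derive_id x). Qed.
Lemma cont_plus (f g : R -> R) x : continuous f x -> continuous g x -> continuous (fun y => f y + g y) x.
Proof. intros; exact (continuous_plus f g x H H0). Qed.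
Lemma cont_mult (f g : R -> R) x : continuous f x -> continuous g x -> continuous (fun y => f y * g y) x.
Proof. intros; exact (continuous_mult f g x H H0). Qed.
Lemma isd_cont (f : R -> R) x l : is_derive f x l -> continuous f x.
Proof. intro H. apply (ex_derive_continuous (K:=R_AbsRing) (V:=R_NormedModule)). exists l; exact H. Qed.
Lemma isd_ext_open (W : R -> Prop) (f g : R -> R) (x l : R) : open W -> W x -> (forall z, W z -> f z = g z) ->
  is_derive f x l -> is_derive g x l.
Proof. intros HW Hx He H. apply (is_derive_ext_loc f g); auto.
  apply (filter_imp W); [auto | apply HW; auto]. Qed.
Lemma cont_ext_open (W : R -> Prop) (f g : R -> R) x : open W -> W x -> (forall z, W z -> f z = g z) ->
  continuous f x -> continuous g x.
Proof. intros HW Hx He H. apply (continuous_ext_loc _ f); auto.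
  apply (filter_imp W); [auto | apply HW; auto]. Qed.

Fixpoint Dk (n : nat) (g : R -> R) (W : R -> Prop) : Prop :=
  match n with
  | O => forall x, W x -> continuous g x
  | S n => exists g', (forall x, W x -> is_derive g x (g' x)) /\ Dk n g' W
  end.

Lemma Dk_weaken n : forall g W, Dk (S n) g W -> Dk n g W.
Proof.
  induction n; intros g W [g' [H1 H2]].
  - intros x Hx. eapply isd_cont; eauto.
  - exists g'; split; auto.
Qed.

Lemma Dk_weaken_le n m g W : (m <= n)%nat -> Dk n g W -> Dk m g W.
Proof. induction 1; auto. intro; apply IHle, Dk_weaken; auto. Qed.

Lemma Dk_mono n : forall g (W W' : R -> Prop), (forall x, W' x -> W x) -> Dk n g W -> Dk n g W'.
Proof.
  induction n; simpl; intros g W W' Hs H.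
  - intros; auto.
  - destruct H as [g' [H1 H2]]; exists g'; split; eauto.
Qed.

Lemma Dk_ext n g1 g2 W : open W -> (forall x, W x -> g1 x = g2 x) -> Dk n g1 W -> Dk n g2 W.
Proof.
  destruct n; simpl; intros HW He H.
  - intros x Hx; eapply cont_ext_open; eauto.
  - destruct H as [g' [H1 H2]]; exists g'; split; auto.
    intros x Hx; eapply isd_ext_open; eauto.
Qed.

Lemma Dk_const n : forall c W, Dk n (fun _ => c) W.
Proof.
  induction n; simpl; intros.
  - apply continuous_const.
  - exists (fun _ => 0); split; auto. intros; apply isd_const.
Qed.

Lemma Dk_id n W : Dk n (fun y => y) W.
Proof.
  destruct n; simpl.
  - intros; apply continuous_id.
  - exists (fun _ => 1); split; [intros; apply isd_id | apply Dk_const].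
Qed.

Lemma Dk_plus n : forall f g W, Dk n f W -> Dk n g W -> Dk n (fun y => f y + g y) W.
Proof.
  induction n; simpl; intros f g W Hf Hg.
  - intros; apply cont_plus; auto.
  - destruct Hf as [f' [F1 F2]], Hg as [g' [G1 G2]].
    exists (fun y => f' y + g' y); split; auto.
    intros; apply isd_plus; auto.
Qed.

Lemma Dk_mult n : forall f g W, Dk n f W -> Dk n g W -> Dk n (fun y => f y * g y) W.
Proof.
  induction n; intros f g W Hf Hg.
  - simpl in *; intros; apply cont_mult; auto.
  - pose proof (Dk_weaken _ _ _ Hf) as Hf0. pose proof (Dk_weaken _ _ _ Hg) as Hg0.
    destruct Hf as [f' [F1 F2]], Hg as [g' [G1 G2]].
    exists (fun y => f' y * g y + f y * g' y); split.
    + intros; apply isd_mult; auto.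
    + apply Dk_plus; apply IHn; auto.
Qed.

Lemma Dk_scal n c f W : Dk n f W -> Dk n (fun y => c * f y) W.
Proof. intro; apply Dk_mult; auto; apply Dk_const. Qed.

Lemma Dk_comp n : forall f g (A B : R -> Prop), (forall x, A x -> B (g x)) ->
  Dk n g A -> Dk n f B -> Dk n (fun x => f (g x)) A.
Proof.
  induction n; intros f g A B HAB Hg Hf.
  - simpl in *; intros x Hx. apply continuous_comp; auto.
  - pose proof (Dk_weaken _ _ _ Hg) as Hg0.
    destruct Hf as [f' [F1 F2]], Hg as [g' [G1 G2]].
    exists (fun x => g' x * f' (g x)); split.
    + intros; apply isd_comp; auto.
    + apply Dk_mult; auto. eapply IHn; eauto.
Qed.

Lemma isd_Rinv x : x <> 0 -> is_derive (fun y => / y) x (- (/ x * / x)).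
Proof.
  intro Hx. pose proof (is_derive_inv (fun y => y) x 1 (isd_id x) Hx) as H.
  eapply is_derive_ext; [| eapply (proj2 (is_derive_Reals _ _ _)) ].
  { intros; reflexivity. }
  apply is_derive_Reals in H. replace (- (/ x * / x)) with (- 1 / x ^ 2) by (field; auto). exact H.
Qed.

Lemma Dk_Rinv n : Dk n (fun y => / y) (fun y => y <> 0).
Proof.
  induction n.
  - simpl; intros x Hx. exact (isd_cont _ _ _ (isd_Rinv x Hx)).
  - exists (fun y => - 1 * (/ y * / y)); split.
    + intros x Hx. replace (-1 * (/ x * / x)) with (- (/ x * / x)) by ring. apply isd_Rinv; auto.
    + apply Dk_scal, Dk_mult; auto.
Qed.

Lemma Dk_inv n a W : Dk n a W -> (forall x, W x -> a x <> 0) -> Dk n (fun x => / a x) W.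
Proof. intros. apply (Dk_comp n (fun y => / y) a W (fun y => y <> 0)); auto. apply Dk_Rinv. Qed.

Definition CK (k : smoothness) g W := match k with fin n => Dk n g W | infty => forall n, Dk n g W end.

Lemma loc_eq_Dn (N : R -> Prop) g g1 y m : open N -> N y -> (forall z, N z -> g z = g1 z) ->
  locally y (fun t => Derive_n g m t = Derive_n g1 m t).
Proof.
  intros HN Hy He. apply (filter_imp N); auto.
  intros t Ht. apply Derive_n_ext_loc. apply (filter_imp N); auto.
Qed.

Lemma Derive_n_S g m x : Derive_n g (S m) x = Derive_n (Derive g) m x.
Proof. change (Derive (Derive_n g m) x = Derive_n (Derive_n g 1) m x).
  rewrite Derive_n_comp. replace (m + 1)%nat with (S m) by lia. reflexivity. Qed.

Definition CkP n g (W : R -> Prop) := (forall m, (m < n)%nat -> forall x, W x -> ex_derive (Derive_n g m) x) /\ (forall x, W x -> continuous (Derive_n g n) x).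

Lemma CkP_Dk n : forall g W, open W -> (CkP n g W <-> Dk n g W).
Proof.
  induction n; intros g W HW; split.
  - intros [_ H]; exact H.
  - intros H; split; [intros; lia | exact H].
  - intros [H1 H2]. exists (Derive g); split.
    + intros x Hx. apply Derive_correct. apply (H1 0%nat); auto; lia.
    + apply IHn; auto. split.
      * intros m Hm x Hx. apply (ex_derive_ext (Derive_n g (S m))). intros; apply Derive_n_S. apply H1; auto; lia.
      * intros x Hx. apply (continuous_ext (Derive_n g (S n))). intros; apply Derive_n_S. apply H2; auto.
  - intros [g' [H1 H2]]. apply IHn in H2; auto. destruct H2 as [H2 H3].
    assert (Hl : forall m x, W x -> locally x (fun t => Derive_n g' m t = Derive_n g (S m) t)).
    { intros m x Hx. apply (filter_imp W); [| apply HW; auto].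
      intros t Ht. rewrite Derive_n_S. symmetry. apply Derive_n_ext_loc. apply (filter_imp W); [|apply HW; auto].
      intros; apply is_derive_unique; auto. }
    split.
    + intros m Hm x Hx. destruct m.
      * exists (g' x); apply H1; auto.
      * apply (ex_derive_ext_loc (Derive_n g' m)). apply Hl; auto. apply H2; auto; lia.
    + intros x Hx. apply (continuous_ext_loc _ (Derive_n g' n)). apply Hl; auto. apply H3; auto.
Qed.

Lemma Ck_on_CK k g W : open W -> (Ck_on k g W <-> CK k g W).
Proof.
  intro HW; destruct k as [n|]; simpl.
  - apply CkP_Dk; auto.
  - split.
    + intros H n. apply CkP_Dk; auto. split; intros; auto.
      apply (ex_derive_continuous (K:=R_AbsRing) (V:=R_NormedModule)); auto.
    + intros H m x Hx. destruct (proj2 (CkP_Dk (S m) g W HW) (H (S m))) as [H1 _]. apply H1; auto; lia.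
Qed.

Lemma Ck_on_local k g (S : R -> Prop) :
  (forall y, S y -> exists (N : R -> Prop) g1, open N /\ N y /\ (forall z, N z -> g z = g1 z) /\ Ck_on k g1 N) ->
  Ck_on k g S.
Proof.
  intros H. destruct k as [n|]; simpl.
  - split.
    + intros m Hm y Hy. destruct (H y Hy) as [N [g1 [HN [Hy' [He [Hc1 Hc2]]]]]].
      apply (ex_derive_ext_loc (Derive_n g1 m)).
      * apply (filter_imp _ _ (fun t (E : Derive_n g m t = Derive_n g1 m t) => eq_sym E)).
        apply loc_eq_Dn with N; auto.
      * apply Hc1; auto.
    + intros y Hy. destruct (H y Hy) as [N [g1 [HN [Hy' [He [Hc1 Hc2]]]]]].
      apply (continuous_ext_loc _ (Derive_n g1 n)).
      * apply (filter_imp _ _ (fun t (E : Derive_n g n t = Derive_n g1 n t) => eq_sym E)).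
        apply loc_eq_Dn with N; auto.
      * apply Hc2; auto.
  - intros m y Hy. destruct (H y Hy) as [N [g1 [HN [Hy' [He Hc]]]]].
    apply (ex_derive_ext_loc (Derive_n g1 m)).
    + apply (filter_imp _ _ (fun t (E : Derive_n g m t = Derive_n g1 m t) => eq_sym E)).
      apply loc_eq_Dn with N; auto.
    + apply Hc; auto.
Qed.

Lemma Ck_on_mono k g (S S' : R -> Prop) : (forall x, S' x -> S x) -> Ck_on k g S -> Ck_on k g S'.
Proof.
  destruct k; simpl; intros Hs H.
  - destruct H as [H1 H2]; split; intros; auto.
  - intros; auto.
Qed.

Lemma CK_mono k g (W W' : R -> Prop) : (forall x, W' x -> W x) -> CK k g W -> CK k g W'.
Proof. destruct k; simpl; intros; eapply Dk_mono; eauto. Qed.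
Lemma CK_ext k g1 g2 W : open W -> (forall x, W x -> g1 x = g2 x) -> CK k g1 W -> CK k g2 W.
Proof. destruct k; simpl; intros; eapply Dk_ext; eauto. Qed.
Lemma CK_const k c W : CK k (fun _ => c) W.
Proof. destruct k; simpl; intros; apply Dk_const. Qed.
Lemma CK_id k W : CK k (fun y => y) W.
Proof. destruct k; simpl; intros; apply Dk_id. Qed.
Lemma CK_plus k f g W : CK k f W -> CK k g W -> CK k (fun y => f y + g y) W.
Proof. destruct k; simpl; intros; apply Dk_plus; auto. Qed.
Lemma CK_mult k f g W : CK k f W -> CK k g W -> CK k (fun y => f y * g y) W.
Proof. destruct k; simpl; intros; apply Dk_mult; auto. Qed.
Lemma CK_comp k f g (A B : R -> Prop) : (forall x, A x -> B (g x)) ->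
  CK k g A -> CK k f B -> CK k (fun x => f (g x)) A.
Proof. destruct k; simpl; intros; eapply Dk_comp; eauto. Qed.
Lemma CK_inv k a W : CK k a W -> (forall x, W x -> a x <> 0) -> CK k (fun x => / a x) W.
Proof. destruct k; simpl; intros; apply Dk_inv; auto. Qed.

Definition image (f : R -> R) (S : R -> Prop) (y : R) : Prop := exists x, S x /\ f x = y.
Definition incr_on (S : R -> Prop) (f : R -> R) := forall x y, S x -> S y -> x < y -> f x < f y.

Lemma ball_R (x e y : R) : ball x e y <-> Rabs (y - x) < e.
Proof. split; intro H; exact H. Qed.

Lemma open_R (D : R -> Prop) : open D <-> forall x, D x -> exists e, 0 < e /\ forall y, Rabs (y - x) < e -> D y.
Proof.
  split.
  - intros H x Hx. destruct (H x Hx) as [eps Heps]. exists eps; split; [apply cond_pos|].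
    intros y Hy; apply Heps, ball_R; auto.
  - intros H x Hx. destruct (H x Hx) as [e [He H']]. exists (mkposreal e He).
    intros y Hy; apply H', ball_R; auto.
Qed.

Lemma cont_pt (f : R -> R) x : continuous f x -> continuity_pt f x.
Proof. intro H; apply continuity_pt_filterlim; exact H. Qed.
Lemma pt_cont (f : R -> R) x : continuity_pt f x -> continuous f x.
Proof. intro H; apply continuity_pt_filterlim; exact H. Qed.

Lemma IVT_loc f a b y : a <= b -> (forall x, a <= x <= b -> continuous f x) -> f a <= y <= f b ->
  exists x, a <= x <= b /\ f x = y.
Proof.
  intros Hab Hc Hy.
  destruct (Req_dec (f a) y) as [E|E]; [exists a; split; [lra|auto]|].
  destruct (Req_dec (f b) y) as [E'|E']; [exists b; split; [lra|auto]|].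
  assert (a < b). { destruct Hab; auto. subst; lra. }
  destruct (Ranalysis5.IVT_interv (fun x => f x - y) a b) as [z [Hz Hz']]; try lra.
  - intros t Ht. apply (continuity_pt_minus f (fun _ => y)).
    + apply cont_pt, Hc; auto.
    + apply continuity_pt_const. intros u v; reflexivity.
  - exists z; split; auto; lra.
Qed.

Lemma IVT_loc_decr f a b y : a <= b -> (forall x, a <= x <= b -> continuous f x) -> f b <= y <= f a ->
  exists x, a <= x <= b /\ f x = y.
Proof.
  intros Hab Hc Hy. destruct (IVT_loc (fun x => - f x) a b (- y)) as [x [Hx E]]; auto.
  - intros x Hx. apply (continuous_opp (K:=R_AbsRing) (V:=R_NormedModule) f). apply Hc; auto.
  - lra.
  - exists x; split; auto; lra.
Qed.

Lemma cont_affine (p q t : R) : continuous (fun s => p + q * s) t.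
Proof. apply (ex_derive_continuous (K:=R_AbsRing) (V:=R_NormedModule)). auto_derive; auto. Qed.

Lemma inj_incr f a b : a < b -> (forall x, a <= x <= b -> continuous f x) ->
  (forall x y, a <= x <= b -> a <= y <= b -> f x = f y -> x = y) -> f a < f b ->
  forall x y, a <= x -> x < y -> y <= b -> f x < f y.
Proof.
  intros Hab Hc Hi Hf x y Hx Hxy Hy.
  destruct (Rlt_or_le (f x) (f y)) as [|Hle]; auto. exfalso.
  assert (Hne : f y < f x). { destruct Hle; auto. apply Hi in H; lra. }
  set (X := fun t => a + (x - a) * t). set (Y := fun t => b + (y - b) * t).
  destruct (IVT_loc (fun t => f (X t) - f (Y t)) 0 1 0) as [t [Ht E]]; try lra.
  - intros t Ht. apply (continuous_minus (K:=R_AbsRing) (V:=R_NormedModule)).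
    + apply continuous_comp; [apply cont_affine|]. apply Hc. unfold X; split; nra.
    + apply continuous_comp; [apply cont_affine|]. apply Hc. unfold Y; split; nra.
  - unfold X, Y. replace (a + (x - a) * 0) with a by ring. replace (b + (y - b) * 0) with b by ring.
    replace (a + (x - a) * 1) with x by ring. replace (b + (y - b) * 1) with y by ring. lra.
  - assert (X t = Y t). { apply Hi; [unfold X; split; nra | unfold Y; split; nra | simpl in E; lra]. }
    unfold X, Y in H. nra.
Qed.

Lemma incr_open_map (I : R -> Prop) f : (forall x, I x -> continuous f x) -> incr_on I f ->
  forall O : R -> Prop, (forall x, O x -> I x) -> open O -> open (image f O).
Proof.
  intros Hc Hi O HO Ho. apply open_R. intros y [x0 [Hx0 E]]. subst y.
  destruct (proj1 (open_R O) Ho x0 Hx0) as [e [He Hb]].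
  set (a := x0 - e/2). set (b := x0 + e/2).
  assert (Oa : O a) by (apply Hb; unfold a; rewrite Rabs_left; lra).
  assert (Ob : O b) by (apply Hb; unfold b; rewrite Rabs_right; lra).
  assert (f a < f x0) by (apply Hi; auto; unfold a; lra).
  assert (f x0 < f b) by (apply Hi; auto; unfold b; lra).
  exists (Rmin (f x0 - f a) (f b - f x0)). split; [apply Rmin_glb_lt; lra|].
  intros z Hz. apply Rabs_def2 in Hz. destruct Hz as [Hz1 Hz2].
  assert (Hm1 := Rmin_l (f x0 - f a) (f b - f x0)). assert (Hm2 := Rmin_r (f x0 - f a) (f b - f x0)).
  destruct (IVT_loc f a b z) as [x [Hx E]]; try (unfold a, b; lra); try lra.
  - intros t Ht. apply Hc, HO, Hb. unfold a, b in Ht. apply Rabs_def1; lra.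
  - exists x; split; auto. apply Hb. unfold a, b in Hx. apply Rabs_def1; lra.
Qed.

Definition inv_on (S : R -> Prop) (f : R -> R) (y : R) : R :=
  match excluded_middle_informative (exists x, S x /\ f x = y) with
  | left H => proj1_sig (constructive_indefinite_description _ H)
  | right _ => 0 end.

Lemma inv_on_spec S f y : image f S y -> S (inv_on S f y) /\ f (inv_on S f y) = y.
Proof.
  intro H. unfold inv_on. destruct excluded_middle_informative as [H'|H'].
  - destruct (constructive_indefinite_description _ H'); auto.
  - contradiction.
Qed.

Lemma inv_on_eq S f x : (forall a b, S a -> S b -> f a = f b -> a = b) -> S x -> inv_on S f (f x) = x.
Proof.
  intros Hi Hx. destruct (inv_on_spec S f (f x)) as [H1 H2]; [exists x; auto|]. apply Hi; auto.
Qed.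

Lemma incr_inj S f : incr_on S f -> forall a b, S a -> S b -> f a = f b -> a = b.
Proof.
  intros H a b Ha Hb E. destruct (Rtotal_order a b) as [h|[h|h]]; auto.
  - specialize (H a b Ha Hb h); lra.
  - specialize (H b a Hb Ha h); lra.
Qed.

Lemma inverse_local (I : R -> Prop) f y : open I -> (forall x, I x -> continuous f x) -> incr_on I f ->
  image f I y -> exists lb ub, lb < inv_on I f y < ub /\ (forall t, lb <= t <= ub -> I t) /\
    (forall z, f lb <= z <= f ub -> lb <= inv_on I f z <= ub /\ f (inv_on I f z) = z) /\
    f lb < y < f ub.
Proof.
  intros HI Hc Hi [x0 [Hx0 E]]. subst y.
  rewrite (inv_on_eq I f x0 (incr_inj I f Hi)); auto.
  destruct (proj1 (open_R I) HI x0 Hx0) as [e [He Hb]].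
  exists (x0 - e/2), (x0 + e/2). 
  assert (Hs : forall t, x0 - e/2 <= t <= x0 + e/2 -> I t) by (intros; apply Hb, Rabs_def1; lra).
  split; [lra|]. split; auto. split.
  - intros z Hz. destruct (IVT_loc f (x0 - e/2) (x0 + e/2) z) as [x [Hx Ex]]; try lra.
    + intros; apply Hc, Hs; auto.
    + subst z. rewrite (inv_on_eq I f x (incr_inj I f Hi)); auto.
  - split; apply Hi; auto; try apply Hs; lra.
Qed.

Lemma inverse_cont (I : R -> Prop) f y : open I -> (forall x, I x -> continuous f x) -> incr_on I f ->
  image f I y -> continuous (inv_on I f) y.
Proof.
  intros HI Hc Hi Hy. destruct (inverse_local I f y HI Hc Hi Hy) as [lb [ub [H1 [H2 [H3 H4]]]]].
  apply pt_cont. apply (Ranalysis5.continuity_pt_recip_interv f (inv_on I f) lb ub); auto; try lra.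
  - intros; apply Hi; try apply H2; lra.
  - intros; unfold comp, id; apply H3; lra.
  - intros; apply H3; lra.
  - intros; apply cont_pt, Hc, H2; auto.
Qed.

Lemma inverse_derive (I : R -> Prop) f f1 y : open I -> (forall x, I x -> continuous f x) -> incr_on I f ->
  (forall x, I x -> is_derive f x (f1 x)) -> (forall x, I x -> f1 x <> 0) ->
  image f I y -> is_derive (inv_on I f) y (/ f1 (inv_on I f y)).
Proof.
  intros HI Hc Hi Hd Hn Hy. set (g := inv_on I f).
  destruct (inverse_local I f y HI Hc Hi Hy) as [lb [ub [H1 [H2 [H3 H4]]]]].
  assert (Eg1 : g (f lb) = lb) by (apply inv_on_eq; [apply incr_inj; auto| apply H2; lra]).
  assert (Eg2 : g (f ub) = ub) by (apply inv_on_eq; [apply incr_inj; auto| apply H2; lra]).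
  assert (Prf : forall a, g (f lb) <= a <= g (f ub) -> derivable_pt f a).
  { intros a Ha. exists (f1 a). apply is_derive_Reals, Hd, H2. lra. }
  assert (Hgy : g (f lb) <= g y <= g (f ub)) by (rewrite Eg1, Eg2; fold g in H1; lra).
  pose proof (Ranalysis5.derivable_pt_lim_recip_interv f g (f lb) (f ub) y Prf) as HH.
  assert (Hdp : derive_pt f (g y) (Prf (g y) Hgy) = f1 (g y)).
  { apply derive_pt_eq_0. apply is_derive_Reals, Hd, H2. fold g in H1; lra. }
  apply is_derive_Reals.
  replace (/ f1 (g y)) with (1 / derive_pt f (g y) (Prf (g y) Hgy)) by (rewrite Hdp; field; apply Hn, H2; fold g in H1; lra).
  apply HH.
  - apply cont_pt, inverse_cont; auto.
  - lra.
  - lra.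
  - intros; unfold comp, id; apply H3; lra.
  - rewrite Hdp. apply Hn, H2; fold g in H1; lra.
Qed.

Definition mj (j : nat) (x : R) : R := if Rlt_dec 0 x then exp (- / x) * / x ^ j else 0.

Lemma mj_nonneg j x : 0 <= mj j x.
Proof.
  unfold mj; destruct Rlt_dec; [|lra].
  apply Rmult_le_pos; [left; apply exp_pos|left; apply Rinv_0_lt_compat, pow_lt; auto].
Qed.

Lemma mj_le0 j x : x <= 0 -> mj j x = 0.
Proof. intro; unfold mj; destruct Rlt_dec; lra. Qed.

Lemma exp_pow_n n s : exp s ^ n = exp (INR n * s).
Proof.
  induction n; simpl; [rewrite Rmult_0_l, exp_0; auto|].
  rewrite IHn, <- exp_plus. f_equal. destruct n; simpl; ring.
Qed.

Lemma key_bound j t : 0 < t -> t ^ (S j) * exp (- t) <= INR (S j) ^ (S j).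
Proof.
  intro Ht. set (N := INR (S j)). assert (HN : 0 < N) by (unfold N; apply lt_0_INR; lia).
  set (s := t / N). assert (Hs : 0 <= s) by (unfold s; apply Rmult_le_pos; [lra|left; apply Rinv_0_lt_compat; auto]).
  assert (H1 : s <= exp s) by (pose proof (exp_ineq1_le s); lra).
  assert (H2 : s ^ (S j) <= exp t).
  { replace t with (N * s) by (unfold s; field; lra). replace (exp (N * s)) with (exp s ^ S j) by (unfold N; apply exp_pow_n). apply pow_incr; lra. }
  replace (t ^ S j) with (N ^ S j * s ^ S j) by (unfold s; rewrite <- Rpow_mult_distr; f_equal; field; lra).
  rewrite Rmult_assoc. rewrite <- (Rmult_1_r (N ^ S j)) at 2.
  apply Rmult_le_compat_l; [left; apply pow_lt; auto|].
  rewrite exp_Ropp. apply (Rmult_le_reg_r (exp t)); [apply exp_pos|].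
  rewrite Rmult_assoc, Rinv_l, Rmult_1_r, Rmult_1_l; auto. apply Rgt_not_eq, exp_pos.
Qed.

Lemma mj_small j h : 0 < h -> exp (- / h) * / h ^ (S j) <= INR (S (S j)) ^ (S (S j)) * h.
Proof.
  intro Hh. pose proof (key_bound (S j) (/ h) (Rinv_0_lt_compat _ Hh)) as K.
  apply (Rmult_le_reg_r (/ h)); [apply Rinv_0_lt_compat; auto|].
  replace (INR (S (S j)) ^ S (S j) * h * / h) with (INR (S (S j)) ^ S (S j)) by (field; lra).
  eapply Rle_trans; [|exact K]. right.
  rewrite <- Rinv_pow by lra. simpl. field. repeat split; try lra; apply pow_nonzero; lra.
Qed.

Definition dmj j x := mj (S (S j)) x + (- INR j) * mj (S j) x.

Lemma mj_derive j x : is_derive (mj j) x (dmj j x).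
Proof.
  destruct (Rtotal_order x 0) as [Hx|[Hx|Hx]].
  - apply (is_derive_ext_loc (fun _ => 0)).
    + apply (filter_imp (fun y => y < 0)); [intros; symmetry; apply mj_le0; lra|].
      apply open_lt; auto.
    + unfold dmj; rewrite !mj_le0 by lra. replace (0 + - INR j * 0) with 0 by ring. apply isd_const.
  - subst x. unfold dmj; rewrite !mj_le0 by lra. replace (0 + - INR j * 0) with 0 by ring.
    apply is_derive_Reals. intros eps He.
    set (C := INR (S (S j)) ^ S (S j)). assert (HC : 0 < C) by (unfold C; apply pow_lt, lt_0_INR; lia).
    exists (mkposreal (eps / C) (Rdiv_lt_0_compat _ _ He HC)). simpl. intros h Hh Hhd.
    rewrite (mj_le0 j 0) by lra. rewrite Rplus_0_l.
    destruct (Rlt_dec 0 h).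
    + unfold mj; destruct Rlt_dec; [|lra].
      replace ((exp (- / h) * / h ^ j - 0) / h - 0) with (exp (- / h) * / h ^ S j) by (simpl; field; split; [apply pow_nonzero|]; lra).
      pose proof (mj_small j h r).
      rewrite Rabs_right; [|apply Rle_ge; apply Rmult_le_pos; [left; apply exp_pos|left; apply Rinv_0_lt_compat, pow_lt; lra]].
      rewrite Rabs_right in Hhd by lra.
      apply Rle_lt_trans with (C * h); auto.
      apply (Rmult_lt_reg_l (/ C)); [apply Rinv_0_lt_compat; auto|].
      replace (/ C * (C * h)) with h by (field; lra). replace (/ C * eps) with (eps / C) by (field; lra). auto.
    + rewrite mj_le0 by lra. replace ((0 - 0) / h - 0) with 0 by (field; auto). rewrite Rabs_R0; auto.
  - apply (is_derive_ext_loc (fun y => exp (- / y) * / y ^ j)).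
    + apply (filter_imp (fun y => 0 < y)); [intros; unfold mj; destruct Rlt_dec; lra|].
      apply open_gt; auto.
    + unfold dmj, mj. destruct Rlt_dec; [|lra].
      auto_derive; [repeat split; try lra; apply pow_nonzero; lra|].
      destruct j; simpl; field; repeat split; try lra; try apply pow_nonzero; lra.
Qed.

Lemma Dk_mj n : forall j W, Dk n (mj j) W.
Proof.
  induction n; intros j W.
  - intros x _. eapply isd_cont, mj_derive.
  - exists (dmj j); split; [intros; apply mj_derive|].
    unfold dmj. apply Dk_plus; auto. apply Dk_scal; auto.
Qed.

Definition step (x : R) : R := mj 0 x * / (mj 0 x + mj 0 (1 - x)).

Lemma mj0_pos x : 0 < x -> 0 < mj 0 x.
Proof. intro; unfold mj; destruct Rlt_dec; [|lra]. simpl. rewrite Rinv_1, Rmult_1_r; apply exp_pos. Qed.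

Lemma step_den x : 0 < mj 0 x + mj 0 (1 - x).
Proof.
  pose proof (mj_nonneg 0 x); pose proof (mj_nonneg 0 (1 - x)).
  destruct (Rlt_dec 0 x); [pose proof (mj0_pos x r); lra|]. pose proof (mj0_pos (1 - x)); lra.
Qed.

Lemma step_0 x : x <= 0 -> step x = 0.
Proof. intro; unfold step; rewrite (mj_le0 0 x) by lra; ring. Qed.
Lemma step_1 x : 1 <= x -> step x = 1.
Proof.
  intro; unfold step; rewrite (mj_le0 0 (1 - x)) by lra. rewrite Rplus_0_r. field.
  pose proof (mj0_pos x); lra.
Qed.

Lemma Dk_step n W : Dk n step W.
Proof.
  unfold step. apply Dk_mult; [apply Dk_mj|]. apply Dk_inv; [|intros; apply Rgt_not_eq, step_den].
  apply Dk_plus; [apply Dk_mj|].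
  apply (Dk_comp n (mj 0) (fun x => 1 - x) W (fun _ => True)); auto; [|apply Dk_mj].
  apply (Dk_mono n _ (fun _ => True)); [auto|].
  apply (Dk_ext n (fun x => 1 + (-1) * x)); [apply open_true| intros; ring|].
  apply Dk_plus; [apply Dk_const|apply Dk_scal, Dk_id].
Qed.

Definition dstep x := (dmj 0 x * mj 0 (1 - x) + mj 0 x * dmj 0 (1 - x)) * / (mj 0 x + mj 0 (1 - x)) ^ 2.

Lemma step_derive x : is_derive step x (dstep x).
Proof.
  unfold step, dstep.
  assert (Hd := step_den x).
  assert (H1 : is_derive (fun y => mj 0 (1 - y)) x (-1 * dmj 0 (1 - x))).
  { apply (isd_comp (mj 0) (fun y => 1 - y)); [apply mj_derive|].
    auto_derive; auto; ring. }
  pose proof (isd_plus _ _ x _ _ (mj_derive 0 x) H1) as H2.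
  pose proof (is_derive_inv _ _ _ H2 (Rgt_not_eq _ _ Hd)) as H3.
  pose proof (isd_mult _ _ x _ _ (mj_derive 0 x) H3) as H4.
  eapply is_derive_ext; [|eapply (proj2 (is_derive_Reals _ _ _))]; [intros; reflexivity|].
  apply is_derive_Reals in H4.
  match goal with |- derivable_pt_lim _ _ ?l => replace l with
    (dmj 0 x * / (mj 0 x + mj 0 (1 - x)) + mj 0 x * (- (dmj 0 x + -1 * dmj 0 (1 - x)) / (mj 0 x + mj 0 (1 - x)) ^ 2)) end.
  - exact H4.
  - field; lra.
Qed.

Lemma dmj0_nonneg x : 0 <= dmj 0 x.
Proof. unfold dmj; simpl. pose proof (mj_nonneg 2 x). lra. Qed.

Lemma dstep_nonneg x : 0 <= dstep x.
Proof.
  unfold dstep. apply Rmult_le_pos.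
  - pose proof (dmj0_nonneg x); pose proof (dmj0_nonneg (1 - x)); pose proof (mj_nonneg 0 x); pose proof (mj_nonneg 0 (1-x)).
    apply Rplus_le_le_0_compat; apply Rmult_le_pos; auto.
  - left; apply Rinv_0_lt_compat, pow_lt, step_den.
Qed.

Lemma dstep_1 x : 1 <= x -> dstep x = 0.
Proof.
  intro. unfold dstep, dmj. rewrite !(mj_le0 _ (1 - x)) by lra. ring.
Qed.

Lemma step_range x : 0 <= step x <= 1.
Proof.
  unfold step. pose proof (step_den x). pose proof (mj_nonneg 0 x); pose proof (mj_nonneg 0 (1-x)).
  split.
  - apply Rmult_le_pos; auto. left; apply Rinv_0_lt_compat; auto.
  - apply (Rmult_le_reg_r (mj 0 x + mj 0 (1 - x))); auto. rewrite Rmult_assoc, Rinv_l; lra.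
Qed.

Lemma Dk_inverse n : forall K w w1, open K -> incr_on K w ->
  (forall x, K x -> is_derive w x (w1 x)) -> (forall x, K x -> 0 < w1 x) -> Dk n w1 K ->
  Dk (S n) (inv_on K w) (image w K).
Proof.
  intros K w w1 HK Hi Hd Hp.
  assert (Hc : forall x, K x -> continuous w x) by (intros; eapply isd_cont; eauto).
  assert (Hg : forall y, image w K y -> K (inv_on K w y)) by (intros; apply inv_on_spec; auto).
  assert (Hder : forall y, image w K y -> is_derive (inv_on K w) y (/ w1 (inv_on K w y))).
  { intros; apply inverse_derive; auto. intros x Hx; specialize (Hp x Hx); lra. }
  induction n; intros Hw1.
  - exists (fun y => / w1 (inv_on K w y)); split; auto.
    apply Dk_inv.
    + apply (Dk_comp 0 w1 (inv_on K w) _ K); auto. simpl; intros; apply inverse_cont; auto.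
    + intros y Hy; specialize (Hp _ (Hg y Hy)); lra.
  - exists (fun y => / w1 (inv_on K w y)); split; auto.
    apply Dk_inv.
    + apply (Dk_comp (S n) w1 (inv_on K w) _ K); auto. apply IHn, Dk_weaken; auto.
    + intros y Hy; specialize (Hp _ (Hg y Hy)); lra.
Qed.

Lemma CK_Dk1 k g W : k <> fin 0 -> CK k g W -> Dk 1 g W.
Proof.
  destruct k as [n|]; intros hk H.
  - apply (Dk_weaken_le n); [destruct n; [congruence|lia] | exact H].
  - exact (H 1%nat).
Qed.

Lemma CK_derive k g W : k <> fin 0 -> CK k g W -> forall x, W x -> is_derive g x (Derive g x).
Proof.
  intros hk H x Hx. destruct (CK_Dk1 k g W hk H) as [g' [H1 _]].
  apply Derive_correct. exists (g' x); auto.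
Qed.

Lemma CK_cont k g W : k <> fin 0 -> CK k g W -> forall x, W x -> continuous g x.
Proof. intros; eapply isd_cont, CK_derive; eauto. Qed.

Lemma CK_inverse k K w : k <> fin 0 -> open K -> incr_on K w -> CK k w K ->
  (forall x, K x -> 0 < Derive w x) -> CK k (inv_on K w) (image w K).
Proof.
  intros hk HK Hi Hw Hp.
  assert (Hd := CK_derive k w K hk Hw).
  destruct k as [n|]; simpl in *.
  - destruct n; [congruence|].
    destruct Hw as [w1 [H1 H2]].
    apply (Dk_inverse n K w w1); auto.
    intros x Hx. rewrite <- (is_derive_unique _ _ _ (H1 x Hx)); auto.
  - intro n. apply (Dk_weaken_le (S n)); [lia|].
    destruct (Hw (S n)) as [w1 [H1 H2]].
    apply (Dk_inverse n K w w1); auto.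
    intros x Hx. rewrite <- (is_derive_unique _ _ _ (H1 x Hx)); auto.
Qed.

Lemma Dk_neg n W : Dk n (fun y => - y) W.
Proof.
  destruct n.
  - intros x _. apply (continuous_opp (K:=R_AbsRing) (V:=R_NormedModule) (fun y => y)), continuous_id.
  - exists (fun _ => -1); split; [|apply Dk_const].
    intros x _. apply (is_derive_opp (fun y => y) x 1), isd_id.
Qed.
Lemma CK_neg k W : CK k (fun y => - y) W.
Proof. destruct k; simpl; intros; apply Dk_neg. Qed.

Lemma CK_of_Ck k g W : open W -> Ck_on k g W -> CK k g W.
Proof. intros HW H; apply Ck_on_CK; auto. Qed.
Lemma Ck_of_CK k g W : open W -> CK k g W -> Ck_on k g W.
Proof. intros HW H; apply Ck_on_CK; auto. Qed.

Definition trR k (D1 : R -> Prop) f1 (D2 : R -> Prop) f2 := exists g,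
  (forall x, D1 x -> D2 x -> g (f1 x) = f2 x) /\ Ck_on k g (image f1 (fun x => D1 x /\ D2 x)).

Definition ochart (D : R -> Prop) f := open D /\ (forall x, D x -> continuous f x) /\
  (forall a b, D a -> D b -> f a = f b -> a = b) /\
  (forall O : R -> Prop, (forall x, O x -> D x) -> open O -> open (image f O)).

Lemma trR_mono k D1 f1 D2 f2 (D1' D2' : R -> Prop) f1' f2' : trR k D1 f1 D2 f2 ->
  (forall x, D1' x -> D2' x -> D1 x /\ D2 x /\ f1' x = f1 x /\ f2' x = f2 x) -> trR k D1' f1' D2' f2'.
Proof.
  intros [g [H1 H2]] Hs. exists g; split.
  - intros x Ha Hb. destruct (Hs x Ha Hb) as [? [? [E1 E2]]]. rewrite E1, E2; auto.
  - eapply Ck_on_mono; [|exact H2]. intros y [x [[Ha Hb] E]]. destruct (Hs x Ha Hb) as [? [? [E1 E2]]].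
    exists x; split; auto. rewrite <- E1; auto.
Qed.

Lemma ochart_image_open D f (O : R -> Prop) : ochart D f -> (forall x, O x -> D x) -> open O -> open (image f O).
Proof. intros [_ [_ [_ H]]]; auto. Qed.

Lemma incr_ochart D f : open D -> incr_on D f -> (forall x, D x -> continuous f x) -> ochart D f.
Proof.
  intros HD Hi Hc. split; auto. split; auto. split.
  - apply incr_inj; auto.
  - intros; eapply incr_open_map; eauto.
Qed.

Lemma trR_via k D1 f1 D2 f2 (G : (R -> Prop) -> (R -> R) -> Prop) : ochart D1 f1 -> open D2 ->
  (forall x, D1 x -> D2 x -> exists D f, G D f /\ D x) ->
  (forall D f, G D f -> ochart D f /\ trR k D1 f1 D f /\ trR k D f D2 f2) -> trR k D1 f1 D2 f2.
Proof.
  intros Hc1 HD2 Hcov HG.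
  exists (fun y => f2 (inv_on D1 f1 y)). split.
  { intros x Hx1 Hx2. rewrite inv_on_eq; auto. apply Hc1. }
  apply Ck_on_local. intros y [x [[Hx1 Hx2] E]]. subst y.
  destruct (Hcov x Hx1 Hx2) as [D [f [HGf HDx]]].
  destruct (HG D f HGf) as [Hoc [[g1 [G1 G1c]] [g2 [G2 G2c]]]].
  set (N := image f1 (fun z => D1 z /\ D2 z /\ D z)).
  assert (HN : open N).
  { apply (ochart_image_open D1); auto; [intros z [? _]; auto|].
    apply open_and; [apply Hc1|apply open_and; auto; apply Hoc]. }
  exists N, (fun y => g2 (g1 y)). split; auto. split; [exists x; auto|]. split.
  { intros y' [z [[Hz1 [Hz2 Hz3]] E]]. subst y'. rewrite G1, G2; auto. rewrite inv_on_eq; auto. apply Hc1. }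
  apply Ck_of_CK; auto.
  assert (HB : open (image f (fun z => D z /\ D2 z))).
  { apply (ochart_image_open D); auto; [intros z [? _]; auto|]. apply open_and; auto; apply Hoc. }
  assert (HA : open (image f1 (fun z => D1 z /\ D z))).
  { apply (ochart_image_open D1); auto; [intros z [? _]; auto|]. apply open_and; [apply Hc1|apply Hoc]. }
  apply (CK_comp k g2 g1 N (image f (fun z => D z /\ D2 z))).
  - intros y' [z [[Hz1 [Hz2 Hz3]] E]]. subst y'. rewrite G1; auto. exists z; auto.
  - apply (CK_mono k g1 (image f1 (fun z => D1 z /\ D z))); [|apply CK_of_Ck; auto].
    intros y' [z [[Hz1 [Hz2 Hz3]] E]]. exists z; auto.
  - apply CK_of_Ck; auto.
Qed.


Lemma isd_minus f g x a b : is_derive f x a -> is_derive g x b -> is_derive (fun y => f y - g y) x (a - b).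
Proof. intros; exact (is_derive_minus f g x a b H H0). Qed.

Lemma incr_deriv_nonneg (J : R -> Prop) u y l : open J -> J y -> incr_on J u -> is_derive u y l -> 0 <= l.
Proof.
  intros HJ Hy Hi Hd. destruct (Rle_or_lt 0 l) as [|Hl]; auto. exfalso.
  apply is_derive_Reals in Hd. destruct (Hd (- l / 2)) as [del Hdel]; [lra|].
  destruct (proj1 (open_R J) HJ y Hy) as [e [He Hb]].
  set (h := Rmin del e / 2).
  assert (Hh : 0 < h) by (unfold h; assert (0 < Rmin del e) by (apply Rmin_glb_lt; [apply cond_pos|auto]); lra).
  assert (Hh2 : h < del /\ h < e) by (unfold h; pose proof (Rmin_l del e); pose proof (Rmin_r del e); pose proof (cond_pos del); lra).
  specialize (Hdel h (Rgt_not_eq _ _ Hh)). rewrite Rabs_right in Hdel by lra. specialize (Hdel (proj1 Hh2)).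
  assert (u y < u (y + h)) by (apply Hi; auto; [apply Hb; rewrite Rabs_right; lra|lra]).
  apply Rabs_def2 in Hdel. destruct Hdel as [H1 H2].
  assert (0 < (u (y + h) - u y) / h) by (apply Rdiv_lt_0_compat; lra). lra.
Qed.

Definition convex (K : R -> Prop) := forall x y z, K x -> K z -> x <= y -> y <= z -> K y.

Lemma incr_of_deriv (K : R -> Prop) w : convex K -> (forall y, K y -> is_derive w y (Derive w y)) ->
  (forall y, K y -> 0 < Derive w y) -> incr_on K w.
Proof.
  intros Hc Hd Hp x y Hx Hy Hxy.
  apply (incr_function_le w x y (Derive w)); simpl; try lra.
  - intros z H1 H2. apply Hd, (Hc x z y); auto.
  - intros z H1 H2. apply Hp, (Hc x z y); auto.
Qed.

Lemma blend_props k (K : R -> Prop) A B lam : k <> fin 0 -> open K -> CK k A K -> CK k B K -> CK k lam K ->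
  (forall y, K y -> 0 <= lam y <= 1) -> (forall y, K y -> 0 < Derive A y) -> (forall y, K y -> 0 < Derive B y) ->
  (forall y, K y -> 0 <= Derive lam y * (B y - A y)) ->
  CK k (fun y => (1 - lam y) * A y + lam y * B y) K /\
  forall y, K y -> 0 < Derive (fun y => (1 - lam y) * A y + lam y * B y) y.
Proof.
  intros hk HK HA HB Hl Hr HdA HdB Hx. split.
  - apply CK_plus; apply CK_mult; auto.
    apply (CK_ext k (fun y => 1 + -1 * lam y)); [auto|intros; ring|].
    apply CK_plus; [apply CK_const|apply CK_mult; [apply CK_const|auto]].
  - intros y Hy.
    assert (E : is_derive (fun y => (1 - lam y) * A y + lam y * B y) y
      ((0 - Derive lam y) * A y + (1 - lam y) * Derive A y + (Derive lam y * B y + lam y * Derive B y))).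
    { pose proof (CK_derive k lam K hk Hl y Hy). pose proof (CK_derive k A K hk HA y Hy).
      pose proof (CK_derive k B K hk HB y Hy).
      pose proof (isd_minus (fun _ => 1) lam y 0 _ (isd_const 1 y) H) as H2.
      pose proof (isd_mult _ A y _ _ H2 H0) as H3.
      pose proof (isd_mult lam B y _ _ H H1) as H4.
      exact (isd_plus _ _ y _ _ H3 H4). }
    assert (E2 : Derive (fun y => (1 - lam y) * A y + lam y * B y) y =
      (0 - Derive lam y) * A y + (1 - lam y) * Derive A y + (Derive lam y * B y + lam y * Derive B y))
      by (apply is_derive_unique; exact E).
    rewrite E2.
    specialize (Hr y Hy); specialize (HdA y Hy); specialize (HdB y Hy); specialize (Hx y Hy).
    destruct (Rlt_or_le (lam y) 1).
    + assert (0 < (1 - lam y) * Derive A y) by (apply Rmult_lt_0_compat; lra).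
      assert (0 <= lam y * Derive B y) by (apply Rmult_le_pos; lra). nra.
    + assert (lam y = 1) by lra. rewrite H0. nra.
Qed.

Lemma Dk_of_CK_step k W : CK k step W.
Proof. destruct k; simpl; intros; apply Dk_step. Qed.

Section Abstract.
Variable k : smoothness.
Hypothesis hk : k <> fin 0.
Variable F : (R -> Prop) -> (R -> R) -> Prop.
Hypothesis HF1 : forall D f, F D f -> ochart D f.
Hypothesis HF2 : forall x, exists D f, F D f /\ D x.
Hypothesis HF3 : forall D1 f1 D2 f2, F D1 f1 -> F D2 f2 -> trR k D1 f1 D2 f2.

Definition compat (D : R -> Prop) f := forall D' f', F D' f' -> trR k D f D' f' /\ trR k D' f' D f.

Lemma compat_pair D1 f1 D2 f2 : ochart D1 f1 -> ochart D2 f2 -> compat D1 f1 -> compat D2 f2 ->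
  trR k D1 f1 D2 f2.
Proof.
  intros H1 H2 C1 C2. apply (trR_via k D1 f1 D2 f2 F).
  - exact H1.
  - apply H2.
  - intros x Hx1 Hx2. apply HF2.
  - intros D f HDf. split; [auto|]. split; [apply C1|apply C2]; auto.
Qed.

Lemma compat_mono D f (D' : R -> Prop) : compat D f -> (forall x, D' x -> D x) -> compat D' f.
Proof.
  intros C Hs D1 f1 HF. destruct (C D1 f1 HF) as [T1 T2]. split.
  - apply (trR_mono k D f D1 f1); auto.
  - apply (trR_mono k D1 f1 D f); auto.
Qed.

Lemma compat_post D f w (J : R -> Prop) : ochart D f -> compat D f -> open J -> incr_on J w ->
  CK k w J -> (forall x, J x -> 0 < Derive w x) -> (forall x, D x -> J (f x)) ->
  compat D (fun x => w (f x)).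
Proof.
  intros Hoc C HJ Hi Hw Hp HfJ Dc c HFc. destruct (C Dc c HFc) as [[g1 [G1 G1c]] [g2 [G2 G2c]]].
  assert (Hwc : forall x, J x -> continuous w x) by (apply CK_cont with k; auto).
  assert (HFo := HF1 Dc c HFc).
  split.
  - exists (fun y => g1 (inv_on J w y)). split.
    + intros x Hx Hcx. rewrite inv_on_eq; auto. apply incr_inj; auto.
    + set (B := image f (fun x => D x /\ Dc x)).
      assert (HB : open B).
      { apply (ochart_image_open D); auto; [intros z [? _]; auto|]. apply open_and; [apply Hoc|apply HFo]. }
      set (A := image w B).
      assert (HA : open A).
      { apply (incr_open_map J w); auto. intros y [x [[Hx _] E]]; subst; auto. }
      apply (Ck_on_mono _ _ A).
      { intros y [x [Hx E]]. exists (f x); split; auto. exists x; auto. }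
      apply Ck_of_CK; auto.
      apply (CK_comp k g1 (inv_on J w) A B).
      * intros y [y0 [[x [Hx E]] E']]. subst. rewrite inv_on_eq; [exists x; auto|apply incr_inj; auto|].
        destruct Hx; auto.
      * apply (CK_mono k _ (image w J)); [|apply CK_inverse; auto].
        intros y [y0 [[x [Hx E]] E']]. subst. exists (f x); split; auto. destruct Hx; auto.
      * apply CK_of_Ck; auto.
  - exists (fun y => w (g2 y)). split.
    + intros x Hcx Hx. rewrite G2; auto.
    + assert (HB : open (image c (fun x => Dc x /\ D x))).
      { apply (ochart_image_open Dc); auto; [intros z [? _]; auto|]. apply open_and; [apply HFo|apply Hoc]. }
      apply Ck_of_CK; auto.
      apply (CK_comp k w g2 _ J); auto.
      * intros y [x [[Hx1 Hx2] E]]. subst. rewrite G2; auto.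
      * apply CK_of_Ck; auto.
Qed.

Lemma compat_neg D f : ochart D f -> compat D f -> compat D (fun x => - f x).
Proof.
  intros Hoc C Dc c HFc. destruct (C Dc c HFc) as [[g1 [G1 G1c]] [g2 [G2 G2c]]].
  assert (HFo := HF1 Dc c HFc).
  split.
  - exists (fun y => g1 (- y)). split.
    + intros x Hx Hcx. rewrite Ropp_involutive; auto.
    + set (B := image f (fun x => D x /\ Dc x)).
      assert (HB : open B).
      { apply (ochart_image_open D); auto; [intros z [? _]; auto|]. apply open_and; [apply Hoc|apply HFo]. }
      assert (HA : open (fun y => B (- y))).
      { apply (open_comp (fun y : R => - y) B); auto. intros x _.
        apply (continuous_opp (K:=R_AbsRing) (V:=R_NormedModule) (fun y => y)), continuous_id. }
      apply (Ck_on_mono _ _ (fun y => B (- y))).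
      { intros y [x [Hx E]]. subst. exists x; split; auto. symmetry; apply Ropp_involutive. }
      apply Ck_of_CK; auto.
      apply (CK_comp k g1 (fun y => - y) _ B); auto.
      * apply CK_neg.
      * apply CK_of_Ck; auto.
  - exists (fun y => - g2 y). split.
    + intros x Hcx Hx. rewrite G2; auto.
    + assert (HB : open (image c (fun x => Dc x /\ D x))).
      { apply (ochart_image_open Dc); auto; [intros z [? _]; auto|]. apply open_and; [apply HFo|apply Hoc]. }
      apply Ck_of_CK; auto.
      apply (CK_comp k (fun y => - y) g2 _ (fun _ => True)); auto.
      * apply CK_of_Ck; auto.
      * apply CK_neg.
Qed.

Lemma compat_F D c : F D c -> compat D c.
Proof. intros H D' f' H'; split; apply HF3; auto. Qed.

Lemma compat_local D H : ochart D H ->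
  (forall x, D x -> exists J h, open J /\ J x /\ (forall z, J z -> D z) /\ (forall z, J z -> H z = h z) /\
     ochart J h /\ compat J h) -> compat D H.
Proof.
  intros Hoc Hloc Dc c HFc. assert (HFo := HF1 Dc c HFc). split.
  - exists (fun y => c (inv_on D H y)). split.
    { intros x Hx Hcx. rewrite inv_on_eq; auto. apply Hoc. }
    apply Ck_on_local. intros y [x [[Hx Hcx] E]]. subst y.
    destruct (Hloc x Hx) as [J [h [HJ [HJx [HJD [HE [Hoh Ch]]]]]]].
    destruct (Ch Dc c HFc) as [[g1 [G1 G1c]] _].
    exists (image h (fun z => J z /\ Dc z)), g1. split.
    { apply (ochart_image_open J); auto; [intros z [? _]; auto|]. apply open_and; [apply Hoh|apply HFo]. }
    split; [exists x; split; [auto|symmetry; apply HE; auto]|]. split; auto.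
    intros y' [z [[Hz1 Hz2] E]]. subst y'. rewrite <- HE; auto. rewrite (inv_on_eq D H z); [|apply Hoc|auto].
    rewrite HE, G1; auto.
  - exists (fun y => H (inv_on Dc c y)). split.
    { intros x Hcx Hx. rewrite inv_on_eq; auto. apply HFo. }
    apply Ck_on_local. intros y [x [[Hcx Hx] E]]. subst y.
    destruct (Hloc x Hx) as [J [h [HJ [HJx [HJD [HE [Hoh Ch]]]]]]].
    destruct (Ch Dc c HFc) as [_ [g2 [G2 G2c]]].
    exists (image c (fun z => Dc z /\ J z)), g2. split.
    { apply (ochart_image_open Dc); auto; [intros z [? _]; auto|]. apply open_and; [apply HFo|apply Hoh]. }
    split; [exists x; split; auto|]. split; auto.
    intros y' [z [[Hz1 Hz2] E]]. subst y'. rewrite (inv_on_eq Dc c z); [|apply HFo|auto].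
    rewrite HE, G2; auto.
Qed.

Definition goodD (D : R -> Prop) f := open D /\ incr_on D f /\ (forall x, D x -> continuous f x) /\ compat D f.

Lemma goodD_ochart D f : goodD D f -> ochart D f.
Proof. intros [H1 [H2 [H3 H4]]]; apply incr_ochart; auto. Qed.

Lemma goodD_mono D f (D' : R -> Prop) : goodD D f -> open D' -> (forall x, D' x -> D x) -> goodD D' f.
Proof.
  intros [H1 [H2 [H3 H4]]] HD' Hs. split; auto. split; [intros x y Hx Hy; apply H2; auto|].
  split; [auto|]. apply compat_mono with D; auto.
Qed.

Lemma good_local D H : open D -> incr_on D H ->
  (forall x, D x -> exists J h, open J /\ J x /\ (forall z, J z -> D z) /\ goodD J h /\ (forall z, J z -> H z = h z)) ->
  goodD D H.
Proof.
  intros HD Hi Hloc.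
  assert (Hc : forall x, D x -> continuous H x).
  { intros x Hx. destruct (Hloc x Hx) as [J [h [HJ [HJx [HJD [Hg HE]]]]]].
    apply (cont_ext_open J h H x); auto. intros; symmetry; auto. apply Hg; auto. }
  split; auto. split; auto. split; auto.
  apply compat_local; [apply incr_ochart; auto|].
  intros x Hx. destruct (Hloc x Hx) as [J [h [HJ [HJx [HJD [Hg HE]]]]]].
  exists J, h. do 4 (split; auto). split; [apply goodD_ochart; auto | apply Hg].
Qed.

Definition itv a b x := a < x < b.
Lemma open_itv a b : open (itv a b).
Proof. apply open_and; [apply open_gt|apply open_lt]. Qed.

Lemma local_good x : exists a b f, a < x < b /\ goodD (itv a b) f.
Proof.
  destruct (HF2 x) as [D [c [HFc HDx]]]. assert (Hoc := HF1 D c HFc).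
  destruct Hoc as [HD [Hcc [Hinj Hom]]].
  destruct (proj1 (open_R D) HD x HDx) as [e [He Hb]].
  set (a := x - e/2). set (b := x + e/2).
  assert (Hab : forall t, a <= t <= b -> D t) by (intros; apply Hb, Rabs_def1; unfold a, b in *; lra).
  exists a, b.
  destruct (Rtotal_order (c a) (c b)) as [Hlt|[Heq|Hgt]].
  - exists c. split; [unfold a, b; lra|]. split; [apply open_itv|]. split.
    + intros y z Hy Hz Hyz. unfold itv in *. apply (inj_incr c a b); try lra.
      * intros; apply Hcc, Hab; auto.
      * intros; apply Hinj; auto.
    + split; [intros; apply Hcc, Hab; unfold itv in *; lra|].
      apply compat_mono with D; [apply compat_F; auto|]. intros; apply Hab; unfold itv in *; lra.
  - exfalso. apply Hinj in Heq; try apply Hab; unfold a, b in *; lra.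
  - exists (fun t => - c t). split; [unfold a, b; lra|]. split; [apply open_itv|]. split.
    + intros y z Hy Hz Hyz. unfold itv in *. apply (inj_incr (fun t => - c t) a b); try lra.
      * intros. apply (continuous_opp (K:=R_AbsRing) (V:=R_NormedModule) c). apply Hcc, Hab; auto.
      * intros; apply Hinj; auto; lra.
    + split.
      * intros. apply (continuous_opp (K:=R_AbsRing) (V:=R_NormedModule) c). apply Hcc, Hab; unfold itv in *; lra.
      * apply compat_mono with D; [apply compat_neg; [apply HF1; auto|apply compat_F; auto]|].
        intros; apply Hab; unfold itv in *; lra.
Qed.

Lemma glue_agree a1 b1 h1 a2 b2 h2 m : goodD (itv a1 b1) h1 -> goodD (itv a2 b2) h2 ->
  a1 <= a2 -> a2 < m -> m < b1 -> b1 <= b2 -> (forall x, a2 < x < b1 -> h1 x = h2 x) ->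
  goodD (itv a1 b2) (fun x => if Rlt_dec x m then h1 x else h2 x).
Proof.
  intros G1 G2 H1 H2 H3 H4 Hag.
  pose proof G1 as [_ [I1 _]]. pose proof G2 as [_ [I2 _]].
  apply good_local; [apply open_itv| |].
  - intros x y Hx Hy Hxy. unfold itv in *.
    destruct (Rlt_dec x m); destruct (Rlt_dec y m).
    + apply I1; unfold itv; auto; lra.
    + assert (h1 x < h1 m) by (apply I1; unfold itv; lra).
      rewrite (Hag m) in H by lra.
      destruct (Req_dec y m); [subst; auto|].
      assert (h2 m < h2 y) by (apply I2; unfold itv; lra). lra.
    + lra.
    + apply I2; unfold itv; auto; lra.
  - intros x Hx. unfold itv in Hx. destruct (Rtotal_order x m) as [Hl|[He|Hg]].
    + exists (itv a1 m), h1. split; [apply open_itv|]. split; [unfold itv; lra|].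
      split; [unfold itv; intros; lra|]. split.
      * apply goodD_mono with (itv a1 b1); auto; [apply open_itv|unfold itv; intros; lra].
      * intros z Hz; unfold itv in Hz. destruct Rlt_dec; [auto|lra].
    + exists (itv a2 b1), h1. split; [apply open_itv|]. split; [unfold itv; lra|].
      split; [unfold itv; intros; lra|]. split.
      * apply goodD_mono with (itv a1 b1); auto; [apply open_itv|unfold itv; intros; lra].
      * intros z Hz; unfold itv in Hz. destruct Rlt_dec; [auto|]. symmetry; apply Hag; lra.
    + exists (itv m b2), h2. split; [apply open_itv|]. split; [unfold itv; lra|].
      split; [unfold itv; intros; lra|]. split.
      * apply goodD_mono with (itv a2 b2); auto; [apply open_itv|unfold itv; intros; lra].
      * intros z Hz; unfold itv in Hz. destruct Rlt_dec; [lra|auto].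
Qed.

Definition ov a b c d x := itv a b x /\ itv c d x.

Lemma transition a b f c d g : goodD (itv a b) f -> goodD (itv c d) g ->
  exists u, (forall x, ov a b c d x -> u (f x) = g x) /\ CK k u (image f (ov a b c d)) /\
    (forall y, image f (ov a b c d) y -> 0 < Derive u y) /\ incr_on (image f (ov a b c d)) u.
Proof.
  intros Gf Gg. assert (Of := goodD_ochart _ _ Gf). assert (Og := goodD_ochart _ _ Gg).
  destruct (compat_pair _ _ _ _ Of Og (proj2 (proj2 (proj2 Gf))) (proj2 (proj2 (proj2 Gg)))) as [u [U1 U2]].
  destruct (compat_pair _ _ _ _ Og Of (proj2 (proj2 (proj2 Gg))) (proj2 (proj2 (proj2 Gf)))) as [v [V1 V2]].
  assert (Hov : open (ov a b c d)) by (apply open_and; apply open_itv).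
  set (W := image f (ov a b c d)).
  assert (HW : open W) by (apply (ochart_image_open (itv a b)); auto; intros x [? _]; auto).
  assert (HW' : open (image g (fun x => itv c d x /\ itv a b x))).
  { apply (ochart_image_open (itv c d)); auto; [intros x [? _]; auto|]. apply open_and; apply open_itv. }
  assert (Cu : CK k u W) by (apply CK_of_Ck; auto).
  assert (Cv : CK k v (image g (fun x => itv c d x /\ itv a b x))) by (apply CK_of_Ck; auto).
  destruct Gf as [_ [If _]]. destruct Gg as [_ [Ig _]].
  assert (Iu : incr_on W u).
  { intros y1 y2 [x1 [Hx1 E1]] [x2 [Hx2 E2]] Hy. subst. rewrite !U1; try apply Hx1; try apply Hx2.
    destruct Hx1, Hx2. apply Ig; auto.
    destruct (Rlt_or_le x1 x2) as [|Hle]; auto. exfalso.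
    destruct Hle as [Hlt|Heq]; [specialize (If x2 x1 H1 H Hlt); lra|subst; lra]. }
  exists u. split; [intros x [? ?]; auto|]. split; auto. split; auto.
  intros y Hy. assert (Hd := CK_derive k u W hk Cu y Hy).
  assert (H0 := incr_deriv_nonneg W u y _ HW Hy Iu Hd).
  destruct Hy as [x0 [[Hx0a Hx0c] E]]. subst y.
  assert (Hgx : image g (fun x => itv c d x /\ itv a b x) (g x0)) by (exists x0; auto).
  assert (Hdv := CK_derive k v _ hk Cv (g x0) Hgx).
  rewrite <- (U1 x0) in Hdv by auto.
  pose proof (isd_comp v u (f x0) _ _ Hdv Hd) as Hc.
  assert (Hid : is_derive (fun z => v (u z)) (f x0) 1).
  { apply (is_derive_ext_loc (fun z => z)); [|apply isd_id].
    apply (filter_imp W); [|apply HW; exists x0; split; [split|]; auto].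
    intros z [x [[Hxa Hxc] E]]. subst z. rewrite U1, V1; auto. }
  assert (Derive u (f x0) * Derive v (u (f x0)) = 1).
  { rewrite <- (is_derive_unique _ _ _ Hc). apply is_derive_unique; auto. }
  destruct H0 as [|H0]; auto. rewrite <- H0 in H. lra.
Qed.

Definition lamf s1 s2 y := step ((y - s1) / (s2 - s1)).

Lemma lam_CK s1 s2 W : CK k (lamf s1 s2) W.
Proof.
  unfold lamf. apply (CK_mono k _ (fun _ => True)); auto.
  apply (CK_comp k step (fun y => (y - s1) / (s2 - s1)) _ (fun _ => True)); auto; [|apply Dk_of_CK_step].
  apply (CK_ext k (fun y => (y + - s1) * / (s2 - s1))); [apply open_true|intros; reflexivity|].
  apply CK_mult; [apply CK_plus; [apply CK_id|apply CK_const]|apply CK_const].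
Qed.

Lemma lam_0 s1 s2 y : s1 < s2 -> y <= s1 -> lamf s1 s2 y = 0.
Proof.
  intros H Hy. unfold lamf. apply step_0. unfold Rdiv. apply Rmult_le_0_r; [lra|].
  left; apply Rinv_0_lt_compat; lra.
Qed.
Lemma lam_1 s1 s2 y : s1 < s2 -> s2 <= y -> lamf s1 s2 y = 1.
Proof.
  intros H Hy. unfold lamf. apply step_1. apply (Rmult_le_reg_r (s2 - s1)); [lra|].
  unfold Rdiv; rewrite Rmult_assoc, Rinv_l; lra.
Qed.
Lemma lam_range s1 s2 y : 0 <= lamf s1 s2 y <= 1.
Proof. apply step_range. Qed.

Lemma dstep_0 x : x <= 0 -> dstep x = 0.
Proof. intro. unfold dstep, dmj. rewrite !(mj_le0 _ x) by lra. ring. Qed.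

Lemma lam_deriv s1 s2 y : s1 < s2 ->
  Derive (lamf s1 s2) y = / (s2 - s1) * dstep ((y - s1) / (s2 - s1)).
Proof.
  intro H. apply is_derive_unique. unfold lamf.
  apply (isd_comp step (fun y => (y - s1) / (s2 - s1))); [apply step_derive|].
  auto_derive; [lra|field; lra].
Qed.

Lemma lam_deriv_nonneg s1 s2 y : s1 < s2 -> 0 <= Derive (lamf s1 s2) y.
Proof.
  intro H. rewrite lam_deriv by auto. apply Rmult_le_pos; [left; apply Rinv_0_lt_compat; lra|apply dstep_nonneg].
Qed.

Lemma lam_deriv_out s1 s2 y : s1 < s2 -> (y <= s1 \/ s2 <= y) -> Derive (lamf s1 s2) y = 0.
Proof.
  intros H Hy. rewrite lam_deriv by auto. destruct Hy.
  - rewrite dstep_0; [ring|]. unfold Rdiv. apply Rmult_le_0_r; [lra|left; apply Rinv_0_lt_compat; lra].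
  - rewrite dstep_1; [ring|]. apply (Rmult_le_reg_r (s2 - s1)); [lra|].
    unfold Rdiv; rewrite Rmult_assoc, Rinv_l; lra.
Qed.

Lemma img_itv a b f p q y : goodD (itv a b) f -> a < p -> p < q -> q < b -> f p < y < f q ->
  exists x, p < x < q /\ f x = y.
Proof.
  intros [_ [Hi [Hc _]]] H1 H2 H3 Hy.
  destruct (IVT_loc f p q y) as [x [Hx E]]; try lra.
  - intros; apply Hc; unfold itv; lra.
  - exists x; split; auto. subst y. destruct Hx as [[Hx1|Hx1] [Hx2|Hx2]]; try subst; try lra.
Qed.

Lemma goodD_post D f w (K : R -> Prop) : goodD D f -> open K -> convex K -> CK k w K ->
  (forall y, K y -> 0 < Derive w y) -> (forall x, D x -> K (f x)) -> goodD D (fun x => w (f x)).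
Proof.
  intros G HK Hcv Hw Hp HfK. pose proof G as [HD [Hi [Hc C]]].
  assert (Iw : incr_on K w) by (apply incr_of_deriv; auto; intros; eapply CK_derive; eauto).
  split; auto. split; [intros x y Hx Hy Hxy; apply Iw; auto|]. split.
  - intros x Hx. apply continuous_comp; auto. eapply CK_cont; eauto.
  - apply compat_post with K; auto. apply goodD_ochart; auto.
Qed.

Lemma goodD_translate D g beta : goodD D g -> goodD D (fun x => g x + beta).
Proof.
  intro G. apply (goodD_post D g (fun y => y + beta) (fun _ => True)); auto.
  - apply open_true.
  - intros x y z; auto.
  - apply CK_plus; [apply CK_id|apply CK_const].
  - intros y _. replace (Derive (fun y => y + beta) y) with 1; [lra|].
    symmetry; apply is_derive_unique. replace 1 with (1 + 0) by ring. apply isd_plus; [apply isd_id|apply isd_const].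
Qed.

Lemma Derive_plus_const u beta y : ex_derive u y -> Derive (fun z => u z + beta) y = Derive u y.
Proof.
  intros [l H]. rewrite (is_derive_unique _ _ _ H). apply is_derive_unique.
  replace l with (l + 0) by ring. apply isd_plus; auto. apply isd_const.
Qed.

Lemma Derive_id_loc w y (N : R -> Prop) : open N -> N y -> (forall z, N z -> w z = z) -> Derive w y = 1.
Proof.
  intros HN Hy He. apply is_derive_unique. apply (is_derive_ext_loc (fun z => z)); [|apply isd_id].
  apply (filter_imp N); [intros; symmetry; auto|apply HN; auto].
Qed.

Lemma glue_right a b f c d g p t M : goodD (itv a b) f -> goodD (itv c d) g ->
  a < p < b -> c < p < d -> p < t < d ->
  exists h, goodD (itv a d) h /\ (forall x, a < x <= p -> h x = f x) /\ M <= h t.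
Proof.
  intros Gf Gg Hp1 Hp2 Ht.
  set (e := Rmin (Rmin b d) t).
  assert (He1 : p < e) by (unfold e; repeat apply Rmin_glb_lt; lra).
  assert (He2 : e <= b /\ e <= d /\ e <= t).
  { unfold e; pose proof (Rmin_l (Rmin b d) t); pose proof (Rmin_r (Rmin b d) t);
    pose proof (Rmin_l b d); pose proof (Rmin_r b d); lra. }
  set (x1 := p + (e - p) / 4). set (x2 := p + (e - p) / 2).
  set (x3 := p + 3 * (e - p) / 4). set (x4 := p + 7 * (e - p) / 8).
  assert (Hx : p < x1 < x2 /\ x2 < x3 < x4 /\ x4 < e) by (unfold x1, x2, x3, x4; lra).
  destruct (transition a b f c d g Gf Gg) as [u [U1 [U2 [U3 U4]]]].
  pose proof Gf as [_ [If [Cf _]]].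
  set (s1 := f x1). set (s2 := f x2).
  assert (Hs : s1 < s2) by (apply If; unfold itv; lra).
  set (beta := Rmax (s2 - u s1) (M - g t)).
  set (lam := lamf s1 s2).
  set (w := fun y => (1 - lam y) * y + lam y * (u y + beta)).
  set (Jf := itv (f p) (f x4)).
  assert (HJ : forall y, Jf y -> image f (ov a b c d) y).
  { intros y Hy. destruct (img_itv a b f p x4 y Gf) as [x [Hx' E]]; try lra; auto; try apply Hy.
    exists x; split; auto. split; unfold itv; lra. }
  assert (Hs1 : image f (ov a b c d) s1) by (exists x1; split; auto; split; unfold itv; lra).
  assert (Hfp : f p < s1) by (apply If; unfold itv; lra).
  assert (Hs2 : s2 < f x4) by (apply If; unfold itv; lra).
  assert (Cu : CK k u Jf) by (apply (CK_mono k u _ Jf HJ U2)).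
  destruct (blend_props k Jf (fun y => y) (fun y => u y + beta) lam hk (open_itv _ _)) as [Bw Bd].
  { apply CK_id. }
  { apply CK_plus; [auto|apply CK_const]. }
  { apply lam_CK. }
  { intros; apply lam_range. }
  { intros y _. replace (Derive (fun y => y) y) with 1; [lra|]. symmetry; apply is_derive_unique, isd_id. }
  { intros y Hy. rewrite Derive_plus_const; [apply U3, HJ; auto|].
    exists (Derive u y). eapply CK_derive; eauto. }
  { intros y Hy. destruct (Rle_dec y s1) as [H1|H1]; [unfold lam; rewrite lam_deriv_out; auto; lra|].
    destruct (Rle_dec s2 y) as [H2|H2]; [unfold lam; rewrite lam_deriv_out; auto; lra|].
    apply Rmult_le_pos; [apply lam_deriv_nonneg; auto|].
    assert (u s1 < u y) by (apply U4; auto; lra).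
    pose proof (Rmax_l (s2 - u s1) (M - g t)). fold beta in H0. lra. }
  fold w in Bw, Bd.
  set (K := fun y => y < f x4).
  assert (HK : open K) by apply open_lt.
  assert (Hw0 : forall z, z < s1 -> w z = z).
  { intros z Hz. unfold w, lam. rewrite lam_0; auto; lra. }
  assert (CwK : CK k w K).
  { apply CK_of_Ck; auto. apply Ck_on_local. intros y Hy.
    destruct (Rlt_dec y s1) as [H1|H1].
    - exists (fun z => z < s1), (fun z => z). split; [apply open_lt|]. split; auto. split; auto.
      apply Ck_of_CK; [apply open_lt|apply CK_id].
    - exists Jf, w. split; [apply open_itv|]. split; [unfold Jf, itv, K in *; lra|]. split; auto.
      apply Ck_of_CK; [apply open_itv|auto]. }
  assert (DwK : forall y, K y -> 0 < Derive w y).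
  { intros y Hy. destruct (Rlt_dec y s1) as [H1|H1].
    - rewrite (Derive_id_loc w y (fun z => z < s1)); auto; [lra|apply open_lt].
    - apply Bd. unfold Jf, itv, K in *; lra. }
  assert (G1 : goodD (itv a x4) (fun x => w (f x))).
  { apply (goodD_post _ f w K); auto.
    - apply goodD_mono with (itv a b); auto; [apply open_itv|unfold itv; intros; lra].
    - intros y1 y2 y3 H1 H3 H12 H23. unfold K in *; lra.
    - intros x Hx5. unfold K. apply If; unfold itv in *; lra. }
  assert (G2 : goodD (itv x2 d) (fun x => g x + beta)).
  { apply goodD_translate. apply goodD_mono with (itv c d); auto; [apply open_itv|unfold itv; intros; lra]. }
  exists (fun x => if Rlt_dec x x3 then w (f x) else g x + beta). split; [|split].
  - apply (glue_agree a x4 _ x2 d _ x3); auto; try lra.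
    intros x Hx0. unfold w, lam. rewrite lam_1; auto.
    + rewrite U1; [ring|split; unfold itv; lra].
    + left; apply If; unfold itv; lra.
  - intros x Hx0. destruct Rlt_dec; [|lra]. apply Hw0. apply If; unfold itv; lra.
  - destruct Rlt_dec; [lra|]. pose proof (Rmax_r (s2 - u s1) (M - g t)). fold beta in H. lra.
Qed.

Lemma glue_left a b f c d g p t M : goodD (itv a b) f -> goodD (itv c d) g ->
  a < p < b -> c < p < d -> c < t < p ->
  exists h, goodD (itv c b) h /\ (forall x, p <= x < b -> h x = f x) /\ h t <= - M.
Proof.
  intros Gf Gg Hp1 Hp2 Ht.
  set (e := Rmax (Rmax a c) t).
  assert (He1 : e < p) by (unfold e; repeat apply Rmax_lub_lt; lra).
  assert (He2 : a <= e /\ c <= e /\ t <= e).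
  { unfold e; pose proof (Rmax_l (Rmax a c) t); pose proof (Rmax_r (Rmax a c) t);
    pose proof (Rmax_l a c); pose proof (Rmax_r a c); lra. }
  set (x0 := e + (p - e) / 8). set (x1 := e + (p - e) / 4). set (x2 := e + (p - e) / 2).
  set (x3 := e + 3 * (p - e) / 4).
  assert (Hx : e < x0 < x1 /\ x1 < x2 < x3 /\ x3 < p) by (unfold x0, x1, x2, x3; lra).
  destruct (transition a b f c d g Gf Gg) as [u [U1 [U2 [U3 U4]]]].
  pose proof Gf as [_ [If [Cf _]]].
  set (s1 := f x2). set (s2 := f x3).
  assert (Hs : s1 < s2) by (apply If; unfold itv; lra).
  set (beta := Rmin (s1 - u s2) (- M - g t)).
  set (lam := lamf s1 s2).
  set (w := fun y => (1 - lam y) * (u y + beta) + lam y * y).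
  set (Jf := itv (f x0) (f p)).
  assert (HJ : forall y, Jf y -> image f (ov a b c d) y).
  { intros y Hy. destruct (img_itv a b f x0 p y Gf) as [x [Hx' E]]; try lra; auto; try apply Hy.
    exists x; split; auto. split; unfold itv; lra. }
  assert (Hs2i : image f (ov a b c d) s2) by (exists x3; split; auto; split; unfold itv; lra).
  assert (Hfp : s2 < f p) by (apply If; unfold itv; lra).
  assert (Hs0 : f x0 < s1) by (apply If; unfold itv; lra).
  assert (Cu : CK k u Jf) by (apply (CK_mono k u _ Jf HJ U2)).
  destruct (blend_props k Jf (fun y => u y + beta) (fun y => y) lam hk (open_itv _ _)) as [Bw Bd].
  { apply CK_plus; [auto|apply CK_const]. }
  { apply CK_id. }
  { apply lam_CK. }
  { intros; apply lam_range. }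
  { intros y Hy. rewrite Derive_plus_const; [apply U3, HJ; auto|].
    exists (Derive u y). eapply CK_derive; eauto. }
  { intros y _. replace (Derive (fun y => y) y) with 1; [lra|]. symmetry; apply is_derive_unique, isd_id. }
  { intros y Hy. destruct (Rle_dec y s1) as [H1|H1]; [unfold lam; rewrite lam_deriv_out; auto; lra|].
    destruct (Rle_dec s2 y) as [H2|H2]; [unfold lam; rewrite lam_deriv_out; auto; lra|].
    apply Rmult_le_pos; [apply lam_deriv_nonneg; auto|].
    assert (u y < u s2) by (apply U4; auto; lra).
    pose proof (Rmin_l (s1 - u s2) (- M - g t)). fold beta in H0. lra. }
  fold w in Bw, Bd.
  set (K := fun y => f x0 < y).
  assert (HK : open K) by apply open_gt.
  assert (Hw0 : forall z, s2 < z -> w z = z).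
  { intros z Hz. unfold w, lam. rewrite lam_1; auto; lra. }
  assert (CwK : CK k w K).
  { apply CK_of_Ck; auto. apply Ck_on_local. intros y Hy.
    destruct (Rlt_dec s2 y) as [H1|H1].
    - exists (fun z => s2 < z), (fun z => z). split; [apply open_gt|]. split; auto. split; auto.
      apply Ck_of_CK; [apply open_gt|apply CK_id].
    - exists Jf, w. split; [apply open_itv|]. split; [unfold Jf, itv, K in *; lra|]. split; auto.
      apply Ck_of_CK; [apply open_itv|auto]. }
  assert (DwK : forall y, K y -> 0 < Derive w y).
  { intros y Hy. destruct (Rlt_dec s2 y) as [H1|H1].
    - rewrite (Derive_id_loc w y (fun z => s2 < z)); auto; [lra|apply open_gt].
    - apply Bd. unfold Jf, itv, K in *; lra. }
  assert (G2 : goodD (itv x0 b) (fun x => w (f x))).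
  { apply (goodD_post _ f w K); auto.
    - apply goodD_mono with (itv a b); auto; [apply open_itv|unfold itv; intros; lra].
    - intros y1 y2 y3 H1 H3 H12 H23. unfold K in *; lra.
    - intros x Hx5. unfold K. apply If; unfold itv in *; lra. }
  assert (G1 : goodD (itv c x2) (fun x => g x + beta)).
  { apply goodD_translate. apply goodD_mono with (itv c d); auto; [apply open_itv|unfold itv; intros; lra]. }
  exists (fun x => if Rlt_dec x x1 then g x + beta else w (f x)). split; [|split].
  - apply (glue_agree c x2 _ x0 b _ x1); auto; try lra.
    intros x Hx0. unfold w, lam. rewrite lam_0; auto.
    + rewrite U1; [ring|split; unfold itv; lra].
    + left; apply If; unfold itv; lra.
  - intros x Hx0. destruct Rlt_dec; [lra|]. apply Hw0. apply Rlt_le_trans with (f p); auto.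
    destruct (Req_dec x p); [subst; lra|]. left; apply If; unfold itv; lra.
  - destruct Rlt_dec; [|lra]. pose proof (Rmin_r (s1 - u s2) (- M - g t)). fold beta in H. lra.
Qed.

Definition Qc r := exists a b f, a < - r /\ r < b /\ goodD (itv a b) f.

Lemma Qc_down r r' : Qc r -> r' <= r -> Qc r'.
Proof. intros [a [b [f [H1 [H2 H3]]]]] H. exists a, b, f; split; [lra|split; [lra|auto]]. Qed.

Lemma cover_all r : 0 <= r -> Qc r.
Proof.
  destruct (classic (forall r, 0 <= r -> Qc r)) as [Hall|Hn]; [intros; auto|].
  exfalso. apply not_all_ex_not in Hn. destruct Hn as [r0 Hr0].
  apply imply_to_and in Hr0. destruct Hr0 as [Hr0a Hr0b].
  set (E := fun r => 0 <= r /\ Qc r).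
  assert (HQ0 : Qc 0).
  { destruct (local_good 0) as [a [b [f [H1 H2]]]]. exists a, b, f. split; [lra|split; [lra|auto]]. }
  destruct (completeness E) as [s [Hs1 Hs2]].
  { exists r0. intros r1 [Hr Hq]. destruct (Rle_or_lt r1 r0); auto. exfalso; apply Hr0b. apply Qc_down with r1; auto; lra. }
  { exists 0; split; [lra|auto]. }
  assert (Hs0 : 0 <= s) by (apply Hs1; split; [lra|auto]).
  destruct (local_good s) as [a1 [b1 [f1 [Hab1 G1]]]].
  destruct (local_good (- s)) as [a2 [b2 [f2 [Hab2 G2]]]].
  set (m := Rmax a1 (- b2)).
  assert (Hm : m < s) by (unfold m; apply Rmax_lub_lt; lra).
  assert (Hr : exists r1, E r1 /\ m < r1).
  { apply NNPP. intro Hno. assert (s <= m).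
    { apply Hs2. intros r1 Er. apply Rnot_lt_le. intro Hlt. apply Hno. exists r1; auto. }
    lra. }
  destruct Hr as [rr [[Hr0 [a [b [f [Ha [Hb Gf]]]]]] Hmr]].
  clear r. rename rr into r.
  assert (Hrs : r <= s) by (apply Hs1; split; auto; exists a, b, f; auto).
  assert (Hm1 := Rmax_l a1 (- b2)). assert (Hm2 := Rmax_r a1 (- b2)). fold m in Hm1, Hm2.
  destruct (glue_right a b f a1 b1 f1 r ((r + b1) / 2) 0 Gf G1) as [h1 [Gh1 _]]; try lra.
  destruct (glue_left a b1 h1 a2 b2 f2 (- r) ((a2 + - r) / 2) 0 Gh1 G2) as [h2 [Gh2 _]]; try lra.
  set (eps := Rmin (b1 - s) (- s - a2) / 2).
  assert (Heps : 0 < eps) by (unfold eps; assert (0 < Rmin (b1 - s) (- s - a2)) by (apply Rmin_glb_lt; lra); lra).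
  assert (Heps2 : eps < b1 - s /\ eps < - s - a2).
  { unfold eps; pose proof (Rmin_l (b1 - s) (- s - a2)); pose proof (Rmin_r (b1 - s) (- s - a2)); lra. }
  assert (E (s + eps)) by (split; [lra|]; exists a2, b1, h2; split; [lra|split; [lra|auto]]).
  apply Hs1 in H. lra.
Qed.

Definition Pn (n : nat) (h : R -> R) := exists a b, a < - INR n /\ INR n < b /\ goodD (itv a b) h /\
  h 0 = 0 /\ INR n <= h (INR n) /\ h (- INR n) <= - INR n.

Lemma Pn_step n h : Pn n h -> exists h', Pn (S n) h' /\ forall x, - INR n <= x <= INR n -> h' x = h x.
Proof.
  intros [a [b [Ha [Hb [G [H0 [Hp Hm]]]]]]].
  assert (Hn := pos_INR n).
  destruct (cover_all (INR n + 2)) as [c [d [kk [Hc [Hd Gk]]]]]; [lra|].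
  destruct (glue_right a b h c d kk (INR n) (INR n + 1) (INR n + 1) G Gk) as [h1 [G1 [E1 M1]]]; try lra.
  destruct (glue_left a d h1 c d kk (- INR n) (- INR n - 1) (INR n + 1) G1 Gk) as [h2 [G2 [E2 M2]]]; try lra.
  exists h2. split.
  - exists c, d. rewrite S_INR. split; [lra|]. split; [lra|]. split; [auto|]. split; [|split].
    + rewrite E2 by lra. rewrite E1 by lra. auto.
    + rewrite E2 by lra. auto.
    + replace (- (INR n + 1)) with (- INR n - 1) by ring. lra.
  - intros x Hx. rewrite E2 by lra. apply E1; lra.
Qed.

Lemma Pn_0 : exists h, Pn 0 h.
Proof.
  destruct (cover_all 0) as [a [b [f [Ha [Hb G]]]]]; [lra|].
  exists (fun x => f x + - f 0). exists a, b. simpl.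
  split; [lra|]. split; [lra|]. split; [apply goodD_translate; auto|].
  replace (- 0) with 0 by ring. split; [ring|]. split; right; ring.
Qed.

Definition Pn_step_sig n h (H : Pn n h) : {h' | Pn (S n) h' /\ forall x, - INR n <= x <= INR n -> h' x = h x} :=
  constructive_indefinite_description _ (Pn_step n h H).

Fixpoint hseq (n : nat) : {h | Pn n h} :=
  match n with
  | O => constructive_indefinite_description _ Pn_0
  | S m => let (h, Hh) := hseq m in
      exist _ (proj1_sig (Pn_step_sig m h Hh)) (proj1 (proj2_sig (Pn_step_sig m h Hh)))
  end.

Definition hs n := proj1_sig (hseq n).

Lemma hs_P n : Pn n (hs n).
Proof. unfold hs; destruct (hseq n); auto. Qed.

Lemma hs_S n x : - INR n <= x <= INR n -> hs (S n) x = hs n x.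
Proof.
  intro Hx. unfold hs. simpl. destruct (hseq n) as [h Hh]. simpl.
  destruct (Pn_step_sig n h Hh) as [h' [H1 H2]]. simpl. apply H2; auto.
Qed.

Lemma hs_le n m x : (n <= m)%nat -> Rabs x <= INR n -> hs m x = hs n x.
Proof.
  intros Hnm Hx. induction Hnm; auto.
  rewrite hs_S; auto. pose proof (Rle_abs x); pose proof (Rle_abs (-x)); rewrite Rabs_Ropp in *.
  pose proof (le_INR _ _ Hnm); lra.
Qed.

Lemma abs_bnd x : - Rabs x <= x <= Rabs x.
Proof. pose proof (Rle_abs x); pose proof (Rle_abs (-x)); rewrite Rabs_Ropp in *; lra. Qed.

Lemma hs_agree n m x : Rabs x <= INR n -> Rabs x <= INR m -> hs n x = hs m x.
Proof.
  intros H1 H2. destruct (Nat.le_ge_cases n m).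
  - symmetry; apply hs_le; auto.
  - apply hs_le; auto.
Qed.

Lemma exists_nat x : exists n, Rabs x < INR n.
Proof. destruct (INR_unbounded (Rabs x)) as [n Hn]. exists n; lra. Qed.

Definition Nx x := proj1_sig (constructive_indefinite_description _ (exists_nat x)).
Lemma Nx_spec x : Rabs x < INR (Nx x).
Proof. unfold Nx; destruct constructive_indefinite_description; auto. Qed.

Definition Hglob x := hs (Nx x) x.

Lemma Hglob_eq n x : Rabs x <= INR n -> Hglob x = hs n x.
Proof. intro; unfold Hglob; apply hs_agree; auto. left; apply Nx_spec. Qed.

Lemma hs_good n : exists a b, a < - INR n /\ INR n < b /\ goodD (itv a b) (hs n).
Proof. destruct (hs_P n) as [a [b [H1 [H2 [H3 _]]]]]. exists a, b; auto. Qed.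

Theorem classify : exists H, goodD (fun _ => True) H /\ H 0 = 0 /\ (forall y, exists x, H x = y).
Proof.
  exists Hglob.
  assert (G : goodD (fun _ => True) Hglob).
  { apply good_local; [apply open_true| |].
    - intros x y _ _ Hxy. set (n := max (Nx x) (Nx y)).
      assert (Hx : Rabs x <= INR n) by (left; eapply Rlt_le_trans; [apply Nx_spec|apply le_INR; unfold n; lia]).
      assert (Hy : Rabs y <= INR n) by (left; eapply Rlt_le_trans; [apply Nx_spec|apply le_INR; unfold n; lia]).
      rewrite !(Hglob_eq n) by auto.
      destruct (hs_good n) as [a [b [Ha [Hb [_ [Hi _]]]]]].
      pose proof (abs_bnd x); pose proof (abs_bnd y).
      apply Hi; unfold itv; lra.
    - intros x _. set (n := Nx x). pose proof (Nx_spec x) as Hn. fold n in Hn.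
      destruct (hs_good n) as [a [b [Ha [Hb Gh]]]].
      exists (itv (- INR n) (INR n)), (hs n). split; [apply open_itv|].
      pose proof (abs_bnd x).
      split; [unfold itv; lra|]. split; [auto|]. split.
      + apply goodD_mono with (itv a b); auto; [apply open_itv|unfold itv; intros; lra].
      + intros z Hz. apply Hglob_eq. unfold itv in Hz. apply Rabs_le; lra. }
  split; auto. split.
  - rewrite (Hglob_eq 0) by (rewrite Rabs_R0; simpl; lra). destruct (hs_P 0) as [_ [_ [_ [_ [_ [H0 _]]]]]]; auto.
  - intros y. destruct (exists_nat y) as [n Hn]. pose proof (abs_bnd y).
    destruct (hs_P n) as [_ [_ [_ [_ [_ [_ [Hp Hm]]]]]]].
    assert (E1 : Hglob (INR n) = hs n (INR n)) by (apply Hglob_eq; rewrite Rabs_right; pose proof (pos_INR n); lra).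
    assert (E2 : Hglob (- INR n) = hs n (- INR n)) by (apply Hglob_eq; rewrite Rabs_Ropp, Rabs_right; pose proof (pos_INR n); lra).
    destruct (IVT_loc Hglob (- INR n) (INR n) y) as [x [_ Ex]]; try lra.
    + intros; apply G; auto.
    + exists x; auto.
Qed.

End Abstract.

Lemma open_ext (D D' : R -> Prop) : (forall x, D x <-> D' x) -> open D -> open D'.
Proof.
  intros He H x Hx. apply He in Hx. apply (filter_imp D); [intros; apply He; auto|apply H; auto].
Qed.

Lemma openL_ext (A B : L -> Prop) : (forall p, A p <-> B p) -> openL A -> openL B.
Proof.
  intros He [H1 H2]. split.
  - apply (open_ext _ _ (fun x => He (pt x)) H1).
  - apply (open_ext (fun x => (x = 0 /\ A o') \/ (x <> 0 /\ A (pt x)))); auto.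
    intro x. rewrite (He o'), (He (pt x)). tauto.
Qed.

Lemma open_nz : open (fun x : R => x <> 0).
Proof.
  apply (open_ext (fun x => x < 0 \/ 0 < x)); [intro x; split; intro H; [lra|]; destruct (Rtotal_order x 0) as [|[|]]; auto; lra|].
  apply open_or; [apply open_lt|apply open_gt].
Qed.

Lemma open_ball_R c e : open (fun y => Rabs (y - c) < e).
Proof.
  apply open_R. intros x Hx. exists (e - Rabs (x - c)). split; [lra|].
  intros y Hy. pose proof (Rabs_triang (y - x) (x - c)). replace (y - x + (x - c)) with (y - c) in H by ring. lra.
Qed.

Lemma cont_from_preimage (D : R -> Prop) (f : R -> R) x :
  (forall W : R -> Prop, open W -> open (fun z => D z /\ W (f z))) -> D x -> continuous f x.
Proof.
  intros H Hx P [eps HP]. change (locally x (fun z => P (f z))).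
  set (W := fun y => Rabs (y - f x) < eps).
  assert (HW := H W (open_ball_R _ _)).
  apply (filter_imp (fun z => D z /\ W (f z))).
  - intros z [_ Hz]. apply (HP (f z)). apply ball_R. exact Hz.
  - apply (HW x). split; auto. unfold W. rewrite Rminus_diag, Rabs_R0. apply cond_pos.
Qed.

Definition iota (x : R) : L := match Req_dec_T x 0 with left _ => o' | right _ => pt x end.

Lemma iota_nz x : x <> 0 -> iota x = pt x.
Proof. intro; unfold iota; destruct Req_dec_T; [contradiction|auto]. Qed.
Lemma iota_0 : iota 0 = o'.
Proof. unfold iota; destruct Req_dec_T; [auto|congruence]. Qed.

Definition embed (e : R -> L) := (forall a b, e a = e b -> a = b) /\
  (forall A : L -> Prop, openL A -> open (fun x => A (e x))) /\
  (forall O : R -> Prop, open O -> openL (fun p => exists x, O x /\ p = e x)).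

Lemma embed_pt : embed pt.
Proof.
  split; [intros a b H; injection H; auto|]. split.
  - intros A [H _]; auto.
  - intros O HO. split.
    + apply (open_ext O); auto. intro x; split; [intro; exists x; auto|intros [y [Hy E]]; injection E; intro; subst; auto].
    + apply (open_ext (fun x => x <> 0 /\ O x)); [|apply open_and; auto; apply open_nz].
      intro x; split.
      * intros [Hx H]. right; split; auto. exists x; auto.
      * intros [[_ [y [_ E]]]|[Hx [y [Hy E]]]]; [discriminate|]. injection E; intro; subst; auto.
Qed.

Lemma embed_iota : embed iota.
Proof.
  split.
  { intros a b H. destruct (Req_dec a 0), (Req_dec b 0); subst; auto.
    - rewrite iota_0, iota_nz in H by auto; discriminate.
    - rewrite iota_0, iota_nz in H by auto; discriminate.
    - rewrite !iota_nz in H by auto. injection H; auto. }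
  split.
  - intros A [_ H]. apply (open_ext (fun x => (x = 0 /\ A o') \/ (x <> 0 /\ A (pt x)))); [|exact H]. intro x. destruct (Req_dec x 0).
    + subst. rewrite iota_0. split; [intros [[_ H']|[H' _]]; auto; congruence|intro; left; auto].
    + rewrite iota_nz by auto. split; [intros [[H' _]|[_ H']]; auto; congruence|intro; right; auto].
  - intros O HO. split.
    + apply (open_ext (fun x => x <> 0 /\ O x)); [|apply open_and; auto; apply open_nz].
      intro x; split.
      * intros [Hx H]. exists x; split; auto. rewrite iota_nz; auto.
      * intros [y [Hy E]]. destruct (Req_dec y 0); [subst; rewrite iota_0 in E; discriminate|].
        rewrite iota_nz in E by auto. injection E; intro; subst; auto.
    + apply (open_ext O); auto. intro x; split.
      * intro H. destruct (Req_dec x 0).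
        -- left. subst. split; auto. exists 0; rewrite iota_0; auto.
        -- right. split; auto. exists x; rewrite iota_nz; auto.
      * intros [[E [y [Hy E']]]|[Hx [y [Hy E']]]].
        -- subst. destruct (Req_dec y 0); [subst; auto|rewrite iota_nz in E' by auto; discriminate].
        -- destruct (Req_dec y 0); [subst; rewrite iota_0 in E'; discriminate|].
           rewrite iota_nz in E' by auto. injection E'; intro; subst; auto.
Qed.

Definition trace (e : R -> L) (A : chart -> Prop) (D : R -> Prop) (f : R -> R) :=
  exists c, A c /\ D = (fun x => cdom c (e x)) /\ f = (fun x => cmap c (e x)).

Lemma trace_ochart e c : embed e -> is_chart c -> ochart (fun x => cdom c (e x)) (fun x => cmap c (e x)).
Proof.
  intros [E1 [E2 E3]] [C1 [C2 [C3 [C4 C5]]]]. split; [apply E2; auto|]. split; [|split].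
  - intros x Hx. apply cont_from_preimage with (fun x => cdom c (e x)); auto.
    intros W HW. apply (E2 (fun p => cdom c p /\ W (cmap c p))); auto.
  - intros a b Ha Hb H. apply E1, C2; auto.
  - intros O HO Ho. apply (open_ext (cimage (cmap c) (fun p => exists x, O x /\ p = e x))).
    + intro y; split.
      * intros [p [[x [Hx E]] E']]. subst. exists x; auto.
      * intros [x [Hx E]]. exists (e x); split; auto. exists x; auto.
    + apply C5; [apply E3; auto|]. intros p [x [Hx E]]; subst; auto.
Qed.

Lemma ochart_mono D f (D' : R -> Prop) : ochart D f -> open D' -> (forall x, D' x -> D x) -> ochart D' f.
Proof.
  intros [H1 [H2 [H3 H4]]] HD' Hs. split; auto. split; [intros; auto|]. split; [intros; auto|].
  intros O HO Ho. apply H4; auto.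
Qed.

Lemma Ck_on_id k (S0 : R -> Prop) : Ck_on k (fun y => y) S0.
Proof.
  apply Ck_on_local. intros y _. exists (fun _ => True), (fun y => y). split; [apply open_true|].
  split; auto. split; auto. apply Ck_of_CK; [apply open_true|apply CK_id].
Qed.

Lemma trans_self k c : trans_Ck k c c.
Proof. exists (fun y => y). split; auto. apply Ck_on_id. Qed.

Lemma deriv_pos_pair k (W W' : R -> Prop) u v : k <> fin 0 -> open W -> open W' -> incr_on W u ->
  CK k u W -> CK k v W' -> (forall y, W y -> W' (u y) /\ v (u y) = y) -> forall y, W y -> 0 < Derive u y.
Proof.
  intros hk HW HW' Iu Cu Cv Hinv y Hy.
  assert (Hd := CK_derive k u W hk Cu y Hy).
  assert (H0 := incr_deriv_nonneg W u y _ HW Hy Iu Hd).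
  destruct (Hinv y Hy) as [Hw' _].
  assert (Hdv := CK_derive k v W' hk Cv (u y) Hw').
  pose proof (isd_comp v u y _ _ Hdv Hd) as Hc.
  assert (Hid : is_derive (fun z => v (u z)) y 1).
  { apply (is_derive_ext_loc (fun z => z)); [|apply isd_id].
    apply (filter_imp W); [|apply HW; auto]. intros z Hz. symmetry; apply Hinv; auto. }
  assert (Derive u y * Derive v (u y) = 1).
  { rewrite <- (is_derive_unique _ _ _ Hc). apply is_derive_unique; auto. }
  destruct H0 as [|H0]; auto. rewrite <- H0 in H. lra.
Qed.

Lemma chart_of_embed e (Dom : L -> Prop) m h : embed e -> (forall p, Dom p <-> exists x, p = e x) ->
  (forall x, m (e x) = h x) -> incr_on (fun _ => True) h -> (forall x, continuous h x) ->
  (forall y, exists x, h x = y) -> is_chart (mkchart Dom m).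
Proof.
  intros [E1 [E2 E3]] HD Hm Hi Hc Hs. unfold is_chart; simpl. split; [|split; [|split; [|split]]].
  - apply (openL_ext (fun p => exists x, True /\ p = e x)); [|apply E3, open_true].
    intro p. rewrite HD. split; intros [x H]; exists x; [apply H|split; auto].
  - intros p q Hp Hq E. apply HD in Hp; apply HD in Hq. destruct Hp as [x ->], Hq as [y ->].
    rewrite !Hm in E. f_equal. apply (incr_inj _ h Hi); auto.
  - apply (open_ext (fun _ => True)); [|apply open_true]. intro y; split; auto.
    intros _. destruct (Hs y) as [x Hx]. exists (e x). split; [apply HD; exists x; auto|]. rewrite Hm; auto.
  - intros W HW. apply (openL_ext (fun p => exists x, W (h x) /\ p = e x)).
    + intro p. split.
      * intros [x [Hx ->]]. split; [apply HD; exists x; auto|]. rewrite Hm; auto.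
      * intros [Hp Hw]. apply HD in Hp. destruct Hp as [x ->]. exists x; split; auto. rewrite <- Hm; auto.
    + apply E3. apply (open_comp h W); auto. intros x _. apply Hc.
  - intros A0 HA0 Hsub. apply (open_ext (image h (fun x => A0 (e x)))).
    + intro y; split.
      * intros [x [Hx E]]. exists (e x); split; auto. rewrite Hm; auto.
      * intros [p [Hp E]]. destruct (proj1 (HD p) (Hsub p Hp)) as [x ->]. exists x; split; auto. rewrite <- Hm; auto.
    + apply (incr_open_map (fun _ => True)); auto.
Qed.

Lemma trans_to k e (Dom : L -> Prop) m h c : (forall p, Dom p <-> exists x, p = e x) -> (forall x, m (e x) = h x) ->
  trR k (fun _ => True) h (fun x => cdom c (e x)) (fun x => cmap c (e x)) -> trans_Ck k (mkchart Dom m) c.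
Proof.
  intros HD Hm [g [G1 G2]]. exists g. simpl. split.
  - intros p Hp Hc. destruct (proj1 (HD p) Hp) as [x ->]. rewrite Hm. apply G1; auto.
  - apply (Ck_on_mono _ _ _ _ (fun y H => H) ) in G2. eapply Ck_on_mono; [|exact G2].
    intros y [p [[Hp Hc] E]]. destruct (proj1 (HD p) Hp) as [x ->]. exists x; split; auto. rewrite <- Hm; auto.
Qed.

Lemma trans_from k e (Dom : L -> Prop) m h c : (forall p, Dom p <-> exists x, p = e x) -> (forall x, m (e x) = h x) ->
  trR k (fun x => cdom c (e x)) (fun x => cmap c (e x)) (fun _ => True) h -> trans_Ck k c (mkchart Dom m).
Proof.
  intros HD Hm [g [G1 G2]]. exists g. simpl. split.
  - intros p Hc Hp. destruct (proj1 (HD p) Hp) as [x ->]. rewrite Hm. apply G1; auto.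
  - eapply Ck_on_mono; [|exact G2].
    intros y [p [[Hc Hp] E]]. destruct (proj1 (HD p) Hp) as [x ->]. exists x; split; auto.
Qed.

Section Main.
Variable k : smoothness.
Hypothesis hk : k <> fin 0.
Variable A : chart -> Prop.
Hypothesis HA : Ck_atlas k A.

Lemma trace_HF1 e : embed e -> forall D f, trace e A D f -> ochart D f.
Proof. intros He D f [c [Hc [-> ->]]]. apply trace_ochart; auto. apply HA; auto. Qed.

Lemma trace_HF2 e : forall x, exists D f, trace e A D f /\ D x.
Proof.
  intro x. destruct HA as [_ [Hcov _]]. destruct (Hcov (e x)) as [c [Hc Hd]].
  exists (fun x => cdom c (e x)), (fun x => cmap c (e x)). split; auto. exists c; auto.
Qed.

Lemma trace_HF3 e : forall D1 f1 D2 f2, trace e A D1 f1 -> trace e A D2 f2 -> trR k D1 f1 D2 f2.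
Proof.
  intros D1 f1 D2 f2 [c1 [H1 [-> ->]]] [c2 [H2 [-> ->]]].
  destruct HA as [_ [_ Hcomp]]. destruct (Hcomp c1 c2 H1 H2) as [[g [G1 G2]] _].
  exists g; split; [intros; apply G1; auto|].
  eapply Ck_on_mono; [|exact G2]. intros y [x [[Ha Hb] E]]. exists (e x); split; auto.
Qed.

Variables hU hV : R -> R.
Hypothesis GU : goodD k (trace pt A) (fun _ => True) hU.
Hypothesis GV : goodD k (trace iota A) (fun _ => True) hV.
Hypothesis HU0 : hU 0 = 0.
Hypothesis HV0 : hV 0 = 0.
Hypothesis SU : forall y, exists x, hU x = y.
Hypothesis SV : forall y, exists x, hV x = y.

Definition phi (p : L) : R := match p with pt x => hU x | o' => 0 end.
Definition psi (p : L) : R := match p with pt x => hV x | o' => hV 0 end.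

Lemma psi_iota x : psi (iota x) = hV x.
Proof. destruct (Req_dec x 0); [subst; rewrite iota_0; auto|rewrite iota_nz; auto]. Qed.

Lemma U_pt p : U_L p <-> exists x, p = pt x.
Proof.
  unfold U_L. destruct p; split; intro H; [exists x; auto|discriminate|contradiction|].
  destruct H; discriminate.
Qed.

Lemma V_iota p : V_L p <-> exists x, p = iota x.
Proof.
  unfold V_L. split.
  - intro H. destruct p.
    + exists x. rewrite iota_nz; auto. intro E; subst; auto.
    + exists 0; rewrite iota_0; auto.
  - intros [x ->]. destruct (Req_dec x 0); [subst; rewrite iota_0; discriminate|].
    rewrite iota_nz by auto. intro E; injection E; auto.
Qed.

Lemma chart_phi : is_chart (mkchart U_L phi).
Proof.
  apply (chart_of_embed pt U_L phi hU embed_pt U_pt); auto.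
  - intros x y _ _; apply GU; auto.
  - intros; apply GU; auto.
Qed.

Lemma chart_psi : is_chart (mkchart V_L psi).
Proof.
  apply (chart_of_embed iota V_L psi hV embed_iota V_iota); auto.
  - apply psi_iota.
  - intros x y _ _; apply GV; auto.
  - intros; apply GV; auto.
Qed.

Definition nz (x : R) := x <> 0.

Lemma trR_UV : trR k nz hU nz hV.
Proof.
  apply (trR_via k nz hU nz hV (fun D f => exists c, A c /\ D = (fun x => x <> 0 /\ cdom c (pt x)) /\ f = (fun x => cmap c (pt x)))).
  - apply ochart_mono with (fun _ => True); auto; [apply (goodD_ochart k (trace pt A)); auto|apply open_nz].
  - apply open_nz.
  - intros x Hx _. destruct HA as [_ [Hcov _]]. destruct (Hcov (pt x)) as [c [Hc Hd]].
    exists (fun x => x <> 0 /\ cdom c (pt x)), (fun x => cmap c (pt x)). split; [exists c; auto|split; auto].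
  - intros D f [c [Hc [-> ->]]]. split; [|split].
    + apply ochart_mono with (fun x => cdom c (pt x)); [apply trace_ochart; [apply embed_pt|apply HA; auto]| |].
      * apply open_and; [apply open_nz|apply embed_pt, HA; auto].
      * intros x [_ H]; auto.
    + destruct GU as [_ [_ [_ C]]]. destruct (C _ _ (ex_intro _ c (conj Hc (conj eq_refl eq_refl)))) as [T _].
      apply (trR_mono k _ _ _ _ _ _ _ _ T). intros x H1 [H2 H3]. repeat split; auto.
    + destruct GV as [_ [_ [_ C]]]. destruct (C _ _ (ex_intro _ c (conj Hc (conj eq_refl eq_refl)))) as [_ T].
      apply (trR_mono k _ _ _ _ _ _ _ _ T). intros x [H1 H2] H3. rewrite iota_nz by auto. repeat split; auto.
Qed.

Lemma trR_VU : trR k nz hV nz hU.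
Proof.
  apply (trR_via k nz hV nz hU (fun D f => exists c, A c /\ D = (fun x => x <> 0 /\ cdom c (iota x)) /\ f = (fun x => cmap c (iota x)))).
  - apply ochart_mono with (fun _ => True); auto; [apply (goodD_ochart k (trace iota A)); auto|apply open_nz].
  - apply open_nz.
  - intros x Hx _. destruct HA as [_ [Hcov _]]. destruct (Hcov (iota x)) as [c [Hc Hd]].
    exists (fun x => x <> 0 /\ cdom c (iota x)), (fun x => cmap c (iota x)). split; [exists c; auto|split; auto].
  - intros D f [c [Hc [-> ->]]]. split; [|split].
    + apply ochart_mono with (fun x => cdom c (iota x)); [apply trace_ochart; [apply embed_iota|apply HA; auto]| |].
      * apply open_and; [apply open_nz|apply embed_iota, HA; auto].
      * intros x [_ H]; auto.
    + destruct GV as [_ [_ [_ C]]]. destruct (C _ _ (ex_intro _ c (conj Hc (conj eq_refl eq_refl)))) as [T _].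
      apply (trR_mono k _ _ _ _ _ _ _ _ T). intros x H1 [H2 H3]. repeat split; auto.
    + destruct GU as [_ [_ [_ C]]]. destruct (C _ _ (ex_intro _ c (conj Hc (conj eq_refl eq_refl)))) as [_ T].
      apply (trR_mono k _ _ _ _ _ _ _ _ T). intros x [H1 H2] H3. rewrite iota_nz in H2 |- * by auto. repeat split; auto.
Qed.

Lemma compatU c : A c -> Ck_compatible k (mkchart U_L phi) c /\ Ck_compatible k c (mkchart U_L phi).
Proof.
  intro Hc. destruct GU as [_ [_ [_ C]]]. destruct (C _ _ (ex_intro _ c (conj Hc (conj eq_refl eq_refl)))) as [T1 T2].
  assert (X1 := trans_to k pt U_L phi hU c U_pt (fun x => eq_refl) T1).
  assert (X2 := trans_from k pt U_L phi hU c U_pt (fun x => eq_refl) T2).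
  split; split; auto.
Qed.

Lemma compatV c : A c -> Ck_compatible k (mkchart V_L psi) c /\ Ck_compatible k c (mkchart V_L psi).
Proof.
  intro Hc. destruct GV as [_ [_ [_ C]]]. destruct (C _ _ (ex_intro _ c (conj Hc (conj eq_refl eq_refl)))) as [T1 T2].
  assert (X1 := trans_to k iota V_L psi hV c V_iota psi_iota T1).
  assert (X2 := trans_from k iota V_L psi hV c V_iota psi_iota T2).
  split; split; auto.
Qed.

Lemma trans_UV : trans_Ck k (mkchart U_L phi) (mkchart V_L psi).
Proof.
  destruct trR_UV as [g [G1 G2]]. exists g. simpl. split.
  - intros p Hu Hv. destruct p as [x|]; [|contradiction]. simpl. apply G1; intro E; subst; auto.
  - eapply Ck_on_mono; [|exact G2]. intros y [p [[Hu Hv] E]]. destruct p as [x|]; [|contradiction].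
    exists x. split; auto. unfold nz; split; intro; subst; auto.
Qed.

Lemma trans_VU : trans_Ck k (mkchart V_L psi) (mkchart U_L phi).
Proof.
  destruct trR_VU as [g [G1 G2]]. exists g. simpl. split.
  - intros p Hv Hu. destruct p as [x|]; [|contradiction]. simpl. apply G1; intro E; subst; auto.
  - eapply Ck_on_mono; [|exact G2]. intros y [p [[Hv Hu] E]]. destruct p as [x|]; [|contradiction].
    exists x. split; auto. unfold nz; split; intro; subst; auto.
Qed.

Lemma union_atlas : Ck_atlas k (atlas_union A (two_charts phi psi)).
Proof.
  split; [|split].
  - intros c [Hc|[E|E]]; subst; [apply HA; auto|apply chart_phi|apply chart_psi].
  - intro p. destruct HA as [_ [Hcov _]]. destruct (Hcov p) as [c [Hc Hd]]. exists c; split; auto. left; auto.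
  - intros c1 c2 [H1|[E1|E1]] [H2|[E2|E2]]; subst.
    + apply HA; auto.
    + apply compatU; auto.
    + apply compatV; auto.
    + apply compatU; auto.
    + split; apply trans_self.
    + split; [apply trans_UV|apply trans_VU].
    + apply compatV; auto.
    + split; [apply trans_VU|apply trans_UV].
    + split; apply trans_self.
Qed.

Lemma two_atlas : Ck_atlas k (two_charts phi psi).
Proof.
  destruct union_atlas as [U1 [U2 U3]]. split; [|split].
  - intros c Hc; apply U1; right; auto.
  - intros [x|]; [exists (mkchart U_L phi)|exists (mkchart V_L psi)]; split; simpl;
      try (left; reflexivity); try (right; reflexivity); discriminate.
  - intros c1 c2 H1 H2; apply U3; right; auto.
Qed.

Lemma orient : orientable phi psi.
Proof.
  destruct trR_UV as [g [G1 G2]]. destruct trR_VU as [g' [G1' G2']].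
  set (W := image hU (fun x => nz x /\ nz x)). set (W' := image hV (fun x => nz x /\ nz x)).
  assert (Hnz : open (fun x => nz x /\ nz x)) by (apply open_and; apply open_nz).
  assert (OU : ochart (fun _ => True) hU) by (apply (goodD_ochart k (trace pt A)); auto).
  assert (OV : ochart (fun _ => True) hV) by (apply (goodD_ochart k (trace iota A)); auto).
  assert (HW : open W) by (apply (ochart_image_open (fun _ => True)); auto).
  assert (HW' : open W') by (apply (ochart_image_open (fun _ => True)); auto).
  destruct GU as [_ [IU _]]. destruct GV as [_ [IV _]].
  assert (Pos : forall y, W y -> 0 < Derive g y).
  { apply (deriv_pos_pair k W W' g g'); auto.
    - intros y1 y2 [x1 [Hx1 E1]] [x2 [Hx2 E2]] Hy. subst. rewrite !G1 by (apply Hx1 || apply Hx2).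
      apply IV; auto. destruct (Rlt_or_le x1 x2) as [|[Hlt|Heq]]; auto; exfalso.
      + specialize (IU x2 x1 I I Hlt); lra.
      + subst; lra.
    - apply CK_of_Ck; auto.
    - apply CK_of_Ck; auto.
    - intros y [x [Hx E]]. subst. rewrite G1 by apply Hx. split; [exists x; auto|]. apply G1'; apply Hx. }
  exists g. split.
  - intros p Hu Hv. destruct p as [x|]; [|contradiction]. simpl. apply G1; intro E; subst; auto.
  - intros y Hy. destruct (SU y) as [x Hx].
    assert (Hx0 : x <> 0) by (intro; subst; auto).
    assert (Wy : W y) by (exists x; split; [split|]; auto).
    exists (Derive g y). split; [|apply Pos; auto].
    apply (CK_derive k g W hk); auto. apply CK_of_Ck; auto.
Qed.

End Main.


Theorem lemma5p9 (k : smoothness) (hk : k <> fin 0)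
  (S : (chart -> Prop) -> Prop) (hS : Ck_structure k S) :
  exists phi psi : L -> R,
    minimal_atlas k phi psi /\ orientable phi psi /\ S (two_charts phi psi).
Proof.
  destruct hS as [A [HA HS]].
  destruct (classify k hk (trace pt A) (trace_HF1 k A HA pt embed_pt) (trace_HF2 k A HA pt) (trace_HF3 k A HA pt))
    as [hU [GU [HU0 SU]]].
  destruct (classify k hk (trace iota A) (trace_HF1 k A HA iota embed_iota) (trace_HF2 k A HA iota) (trace_HF3 k A HA iota))
    as [hV [GV [HV0 SV]]].
  exists (phi hU), (psi hV). split; [|split].
  - split; [apply (two_atlas k A HA hU hV GU GV SU SV)|]. split; [|split; [|split]].
    + intro y. destruct (SU y) as [x Hx]. exists (pt x). split; auto. unfold U_L; discriminate.
    + intro y. destruct (SV y) as [x Hx]. exists (iota x). split; [apply V_iota; exists x; auto|].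
      rewrite psi_iota; auto.
    + simpl; auto.
    + simpl; auto.
  - apply (orient k hk A HA hU hV GU GV HU0 SU).
  - apply HS. split; [apply (two_atlas k A HA hU hV GU GV SU SV)|apply (union_atlas k A HA hU hV GU GV SU SV)].
Qed.
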